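(* Let $X$ be a vector field on $\mathbb{S}^1$. Then: (1) if $X$ is continuous, then $\mathcal{E}_X^+$ and $\mathcal{E}_X^-$ extend continuously to $X$; (2) if $X$ is lower semicontinuous, then $\mathcal{E}_X^-$ extends radially to $X$; (3) if $X$ is upper semicontinuous, then $\mathcal{E}_X^+$ extends radially to $X$.
   Context: $\mathbb{R}^{1,2}$ is $\mathbb{R}^3$ with $\langle x,y\rangle=-x_0y_0+x_1y_1+x_2y_2$; $\Pi(x_0,x_1,x_2)=(x_1/x_0,x_2/x_0)$ identifies $\mathbb{H}^2$ with the Klein disk $\mathbb{D}^2$, boundary $\mathbb{S}^1$. The Minkowski cross product satisfies $\langle x\boxtimes y,v\rangle=\det(x,y,v)$ for all $v$. A vector field $X$ on $\mathbb{S}^1$ is written $X(z)=iz\phi_X(z)$, $\phi_X:\mathbb{S}^1\to\mathbb{R}$; $X$ is lower/upper semicontinuous if $\phi_X$ is. For $\eta\in\overline{\mathbb{D}^2}$, $\phi_X^-(\eta)=\sup\{a(\eta):a\text{ affine on }\mathbb{R}^2,a|_{\mathbb{S}^1}\le\phi_X\}$ and $\phi_X^+(\eta)=\inf\{a(\eta):a\text{ affine},a|_{\mathbb{S}^1}\ge\phi_X\}$. For $\eta\in\mathbb{D}^2$ let $\Sigma^-(\eta)$ be the set of $\sigma\in\mathbb{R}^{1,2}$ with $\langle(1,\xi),\sigma\rangle\le\phi_X^-(\xi)$ for all $\xi\in\mathbb{D}^2$ and equality at $\xi=\eta$ (i.e. the plane $t=\langle(1,\xi),\sigma\rangle$ in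 $\mathbb{D}^2\times\mathbb{R}$ is a support plane of the epigraph of $\phi_X^-$ at $(\eta,\phi_X^-(\eta))$), and $\Sigma^+(\eta)$ the analogous set with $\ge\phi_X^+$. (For $X$ lower, resp. upper, semicontinuous, $\Sigma^-(\eta)$, resp. $\Sigma^+(\eta)$, is always a single point or a compact segment.) Define $\mathcal{E}_X^\pm(\eta)=\mathrm{d}_{(1,\eta)}\Pi((1,\eta)\boxtimes\sigma^\pm(\eta))$, where $\sigma^\pm(\eta)$ is the unique element of $\Sigma^\pm(\eta)$ if it is a point and the midpoint of $\Sigma^\pm(\eta)$ if it is a segment. A vector field $\hat X$ on $\mathbb{D}^2$ extends continuously to $X$ if $\hat X(\eta_n)\to X(z)$ whenever $\eta_n\in\mathbb{D}^2$, $\eta_n\to z\in\mathbb{S}^1$; it extends radially to $X$ if $\lim_{s\to0^+}\hat X((1-s)z+sx)=X(z)$ for all $z\in\mathbb{S}^1$, $x\in\mathbb{D}^2$. *)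

(* Defs.v *)
From HB Require Import structures.
From mathcomp Require Import all_boot all_order all_algebra.
From mathcomp Require Import all_classical all_reals all_analysis.
Set Implicit Arguments. Unset Strict Implicit. Unset Printing Implicit Defensive.
Import Order.TTheory GRing.Theory Num.Theory.
Import numFieldNormedType.Exports.
Local Open Scope classical_set_scope.
Local Open Scope ring_scope.

Section Defs.
Variable R : realType.

(* points of R^2 are pairs (x1,x2); points of R^{1,2} are triples ((x0,x1),x2) *)
Definition t0 (x : R * R * R) : R := x.1.1.
Definition t1 (x : R * R * R) : R := x.1.2.
Definition t2 (x : R * R * R) : R := x.2.

Definition S1 : set (R * R) := [set z | z.1 ^+ 2 + z.2 ^+ 2 = 1].
Definition D2 : set (R * R) := [set z | z.1 ^+ 2 + z.2 ^+ 2 < 1].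

Definition mink (x y : R * R * R) : R := - t0 x * t0 y + t1 x * t1 y + t2 x * t2 y.

(* Minkowski cross product, written out: the unique vector with
   <x ⊠ y, v> = det(x,y,v) for all v (i.e. diag(-1,1,1) times the
   Euclidean cross product). *)
Definition mcross (x y : R * R * R) : R * R * R :=
  ((- (t1 x * t2 y - t2 x * t1 y), t2 x * t0 y - t0 x * t2 y),
   t0 x * t1 y - t1 x * t0 y).

Definition lift1 (xi : R * R) : R * R * R := ((1, xi.1), xi.2).

(* differential of Pi(x0,x1,x2) = (x1/x0, x2/x0) at the point x, applied to v *)
Definition dPi (x v : R * R * R) : R * R :=
  (t1 v / t0 x - t1 x * t0 v / (t0 x) ^+ 2,
   t2 v / t0 x - t2 x * t0 v / (t0 x) ^+ 2).

(* vector field X on S^1 given by X(z) = i z phi(z) *)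
Definition Xf (phi : R * R -> R) (z : R * R) : R * R :=
  (- z.2 * phi z, z.1 * phi z).

Definition affine_ev (c : R * R * R) (eta : R * R) : R :=
  t0 c + t1 c * eta.1 + t2 c * eta.2.

Definition phi_minus (phi : R * R -> R) (eta : R * R) : R :=
  sup [set y | exists c, (forall z, S1 z -> affine_ev c z <= phi z) /\ y = affine_ev c eta].
Definition phi_plus (phi : R * R -> R) (eta : R * R) : R :=
  inf [set y | exists c, (forall z, S1 z -> phi z <= affine_ev c z) /\ y = affine_ev c eta].

Definition Sigma_minus (phi : R * R -> R) (eta : R * R) : set (R * R * R) :=
  [set s | (forall xi, D2 xi -> mink (lift1 xi) s <= phi_minus phi xi)
           /\ mink (lift1 eta) s = phi_minus phi eta].
Definition Sigma_plus (phi : R * R -> R) (eta : R * R) : set (R * R * R) :=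
  [set s | (forall xi, D2 xi -> phi_plus phi xi <= mink (lift1 xi) s)
           /\ mink (lift1 eta) s = phi_plus phi eta].

Definition comb3 (t : R) (p q : R * R * R) : R * R * R :=
  (((1 - t) * t0 p + t * t0 q, (1 - t) * t1 p + t * t1 q), (1 - t) * t2 p + t * t2 q).
Definition segment3 (p q : R * R * R) : set (R * R * R) :=
  [set comb3 t p q | t in [set t : R | 0 <= t <= 1]].

(* m is "the unique element / the midpoint" of S, where S is a point or a
   compact segment *)
Definition is_midpoint_of (S : set (R * R * R)) (m : R * R * R) : Prop :=
  exists p q, S = segment3 p q /\ m = comb3 (2^-1) p q.

Definition midpt (S : set (R * R * R)) : R * R * R :=
  xget ((0, 0), 0) (is_midpoint_of S).

Definition E_minus (phi : R * R -> R) (eta : R * R) : R * R :=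
  dPi (lift1 eta) (mcross (lift1 eta) (midpt (Sigma_minus phi eta))).
Definition E_plus (phi : R * R -> R) (eta : R * R) : R * R :=
  dPi (lift1 eta) (mcross (lift1 eta) (midpt (Sigma_plus phi eta))).

Definition lsc_on (A : set (R * R)) (f : R * R -> R) : Prop :=
  forall z, A z -> forall a, a < f z -> \forall w \near within A (nbhs z), a < f w.
Definition usc_on (A : set (R * R)) (f : R * R -> R) : Prop :=
  forall z, A z -> forall a, f z < a -> \forall w \near within A (nbhs z), f w < a.

Definition extends_continuously (hX : R * R -> R * R) (X : R * R -> R * R) : Prop :=
  forall (u : nat -> R * R) (z : R * R), (forall n, D2 (u n)) -> S1 z ->
    u @ \oo --> z -> (hX \o u) @ \oo --> X z.

Definition extends_radially (hX : R * R -> R * R) (X : R * R -> R * R) : Prop :=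
  forall z x, S1 z -> D2 x ->
    hX ((1 - s) * z.1 + s * x.1, (1 - s) * z.2 + s * x.2) @[s --> 0^'+] --> X z.

End Defs.

(* Main.v *)
Require Import Defs.
From mathcomp Require Import all_boot all_order all_algebra.
From mathcomp Require Import all_classical all_reals all_analysis.
From mathcomp Require Import ring lra.
Import Order.TTheory GRing.Theory Num.Theory.
Import numFieldNormedType.Exports.
Local Open Scope classical_set_scope.
Local Open Scope ring_scope.
Set Implicit Arguments. Unset Strict Implicit. Unset Printing Implicit Defensive.

Section Basics.
Variable R : realType.
Implicit Types (z w x y xi eta : R * R) (c : R * R * R).

Definition nn (w : R * R) : R := w.1 ^+ 2 + w.2 ^+ 2.
Definition ps (s : R) (z x : R * R) : R * R :=
  ((1 - s) * z.1 + s * x.1, (1 - s) * z.2 + s * x.2).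
Definition Bc (phi : R * R -> R) c := forall z, S1 z -> affine_ev c z <= phi z.

Lemma aff_ps c s z x : affine_ev c (ps s z x) = (1 - s) * affine_ev c z + s * affine_ev c x.
Proof. rewrite /affine_ev /ps /t0 /t1 /t2 /=; ring. Qed.

Lemma nn_ps s z x : nn (ps s z x) =
  (1 - s) * nn z + s * nn x - s * (1 - s) * ((z.1 - x.1) ^+ 2 + (z.2 - x.2) ^+ 2).
Proof. rewrite /nn /ps /=; ring. Qed.

Lemma D2_ps s z x : S1 z -> D2 x -> 0 < s <= 1 -> D2 (ps s z x).
Proof.
rewrite /S1 /D2 /= => hz hx /andP[s0 s1]; have := nn_ps s z x; rewrite /nn => ->.
rewrite hz. have h1 : 0 <= s * (1 - s) * ((z.1 - x.1) ^+ 2 + (z.2 - x.2) ^+ 2).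
  apply: mulr_ge0; [apply: mulr_ge0; lra | apply: addr_ge0; exact: sqr_ge0].
nra.
Qed.

Lemma sq_le1 (a b : R) : a ^+ 2 + b ^+ 2 <= 1 -> `|a| <= 1.
Proof.
move=> h; have hb := sqr_ge0 b; rewrite -(ler_pXn2r (n:=2)) ?nnegrE //.
by rewrite expr1n real_normK ?num_real //; lra.
Qed.

Lemma D2_disp1 xi (e : R) : D2 xi -> `|e| <= 1 ->
  D2 (xi.1 + (1 - nn xi) / 4 * e, xi.2).
Proof.
rewrite /D2 /nn /= => h he.
have a1 : `|xi.1| <= 1 by apply: (@sq_le1 xi.1 xi.2); lra.
set d := 1 - (xi.1 ^+ 2 + xi.2 ^+ 2).
have d0 : 0 < d by rewrite /d; lra.
have d1 : d <= 1 by rewrite /d; have := sqr_ge0 xi.1; have := sqr_ge0 xi.2; lra.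
have h1 : xi.1 * e <= 1.
  apply: le_trans (ler_norm _) _; rewrite normrM.
  have := normr_ge0 xi.1; have := normr_ge0 e; nra.
have h3 : e ^+ 2 <= 1 by rewrite -real_normK ?num_real //; have := normr_ge0 e; nra.
have -> : (xi.1 + d / 4 * e) ^+ 2 + xi.2 ^+ 2 =
   (xi.1 ^+ 2 + xi.2 ^+ 2) + d / 2 * (xi.1 * e) + d ^+ 2 / 16 * e ^+ 2 by field.
have : d / 2 * (xi.1 * e) <= d / 2 by nra.
have : d ^+ 2 / 16 * e ^+ 2 <= d / 16 by nra.
rewrite /d; lra.
Qed.

Lemma D2_disp2 xi (e : R) : D2 xi -> `|e| <= 1 ->
  D2 (xi.1, xi.2 + (1 - nn xi) / 4 * e).
Proof.
move=> h he; have hh : D2 (xi.2, xi.1) by move: h; rewrite /D2 /= addrC.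
have := @D2_disp1 (xi.2, xi.1) e hh he; rewrite /D2 /nn /=.
have -> : xi.2 ^+ 2 + xi.1 ^+ 2 = xi.1 ^+ 2 + xi.2 ^+ 2 by ring.
lra.
Qed.

End Basics.

Section Minus.
Variable R : realType.
Implicit Types (z w x y xi eta : R * R) (c : R * R * R).

Lemma midchord eta : D2 eta -> exists w w', S1 w /\ S1 w' /\
  eta.1 = (w.1 + w'.1) / 2 /\ eta.2 = (w.2 + w'.2) / 2 /\
  (w.1 - eta.1) ^+ 2 + (w.2 - eta.2) ^+ 2 = 1 - nn eta.
Proof.
rewrite /D2 /S1 /nn /= => h.
have [n0|n0] := eqVneq (eta.1 ^+ 2 + eta.2 ^+ 2) 0.
  have e1 : eta.1 = 0.
    apply/eqP; rewrite -sqrf_eq0 eq_le sqr_ge0 andbT.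
    by have := sqr_ge0 eta.2; lra.
  have e2 : eta.2 = 0.
    apply/eqP; rewrite -sqrf_eq0 eq_le sqr_ge0 andbT.
    by have := sqr_ge0 eta.1; lra.
  exists (1, 0), (-1, 0); rewrite /= e1 e2; split; first by ring.
  split; first by ring. split; first by field. split; first by field. by ring.
have np : 0 < eta.1 ^+ 2 + eta.2 ^+ 2.
  by rewrite lt_def n0 /= addr_ge0 ?sqr_ge0.
set n := eta.1 ^+ 2 + eta.2 ^+ 2 in h n0 np *.
have q0 : 0 <= (1 - n) / n by apply: divr_ge0; lra.
set k := Num.sqrt ((1 - n) / n).
have hk : k ^+ 2 = (1 - n) / n by rewrite sqr_sqrtr.
have hk2 : k ^+ 2 * n = 1 - n by rewrite hk; field.
exists (eta.1 - k * eta.2, eta.2 + k * eta.1), (eta.1 + k * eta.2, eta.2 - k * eta.1) => /=.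
split; first by rewrite -[1](subrK n) -hk2 /n; ring.
split; first by rewrite -[1](subrK n) -hk2 /n; ring.
split; first by field. split; first by field.
by rewrite -hk2 /n; ring.
Qed.

Variables (phi : R * R -> R) (m : R).
Hypothesis hm : forall z, S1 z -> m <= phi z.

Definition Aset eta := [set y | exists c, (forall z, S1 z -> affine_ev c z <= phi z) /\ y = affine_ev c eta].

Lemma Bc_m : Bc phi ((m, 0), 0).
Proof. by move=> z hz; rewrite /affine_ev /t0 /t1 /t2 /= !mul0r !addr0; apply: hm. Qed.

Lemma Aset_n0 eta : Aset eta !=set0.
Proof. by exists (affine_ev ((m, 0), 0) eta); exists ((m, 0), 0); split => //; exact: Bc_m. Qed.

Lemma aff_mid c eta w w' : eta.1 = (w.1 + w'.1) / 2 -> eta.2 = (w.2 + w'.2) / 2 ->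
  affine_ev c eta = (affine_ev c w + affine_ev c w') / 2.
Proof. by rewrite /affine_ev => -> ->; field. Qed.

Lemma Aset_sup eta : D2 eta -> has_sup (Aset eta).
Proof.
move=> /midchord [w [w' [hw [hw' [e1 [e2 _]]]]]].
split; first exact: Aset_n0.
exists ((phi w + phi w') / 2) => y [c [hc ->]].
rewrite (aff_mid c e1 e2) ler_pM2r ?invr_gt0 ?ltr0n //.
by apply: lerD; apply: hc.
Qed.

Lemma pm_ge eta c : D2 eta -> Bc phi c -> affine_ev c eta <= phi_minus phi eta.
Proof.
move=> he hc; apply: (ub_le_sup (Aset_sup he).2); by exists c.
Qed.

Lemma pm_le eta M : (forall c, Bc phi c -> affine_ev c eta <= M) -> phi_minus phi eta <= M.
Proof.
move=> h; apply: (ge_sup (Aset_n0 eta)) => y [c [hc ->]]; exact: h.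
Qed.

Lemma pm_mid eta w w' : D2 eta -> S1 w -> S1 w' ->
  eta.1 = (w.1 + w'.1) / 2 -> eta.2 = (w.2 + w'.2) / 2 ->
  phi_minus phi eta <= (phi w + phi w') / 2.
Proof.
move=> he hw hw' e1 e2; apply: pm_le => c hc.
rewrite (aff_mid c e1 e2) ler_pM2r ?invr_gt0 ?ltr0n //.
by apply: lerD; apply: hc.
Qed.

Lemma pm_lbm eta : D2 eta -> m <= phi_minus phi eta.
Proof.
move=> he; have := pm_ge he Bc_m.
by rewrite /affine_ev /t0 /t1 /t2 /= !mul0r !addr0.
Qed.

Lemma pm_conv s z x : S1 z -> D2 x -> 0 <= s <= 1 ->
  phi_minus phi (ps s z x) <= (1 - s) * phi z + s * phi_minus phi x.
Proof.
move=> hz hx /andP[s0 s1]; apply: pm_le => c hc; rewrite aff_ps.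
apply: lerD; first by apply: ler_wpM2l; [lra | exact: hc].
by apply: ler_wpM2l => //; exact: pm_ge.
Qed.

End Minus.

Section Minus2.
Variable R : realType.
Implicit Types (z w x y xi eta : R * R) (c : R * R * R).
Variables (phi : R * R -> R) (m : R).
Hypothesis hm : forall z, S1 z -> m <= phi z.

Lemma radial_bd b z x : S1 z -> D2 x ->
  (forall s, 0 < s -> s <= 2^-1 -> affine_ev b (ps s z x) <= phi_minus phi (ps s z x)) ->
  affine_ev b z <= phi z.
Proof.
move=> hz hx h; rewrite leNgt; apply/negP => hlt.
set e := affine_ev b z - phi z.
have e0 : 0 < e by rewrite /e subr_gt0.
set C := phi_minus phi x - affine_ev b x.
set t := e / (4 * (`|C| + 1)).
have Cp : 0 < `|C| + 1 by have := normr_ge0 C; lra.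
have t0 : 0 < t by rewrite /t divr_gt0 // mulr_gt0.
have ht : t * (4 * (`|C| + 1)) = e by rewrite /t; field; lra.
set s := Num.min (2^-1) t.
have s0 : 0 < s by rewrite /s lt_min t0 invr_gt0 ltr0n.
have s1 : s <= 2^-1 by rewrite /s ge_min lexx.
have s2 : s <= t by rewrite /s ge_min lexx orbT.
have := h s s0 s1.
have := pm_conv hm (s := s) hz hx.
rewrite aff_ps => H1 H2.
have s01 : 0 <= s <= 1 by apply/andP; split; lra.
have := H1 s01 => H3.
have H4 : (1 - s) * e <= s * C.
  rewrite /e /C; move: H2 H3; set P := phi_minus _ _; nra.
have nC := ler_norm C.
have H5 : s * C <= t * `|C| by nra.
nra.
Qed.

Definition lscE (f : R * R -> R) z := forall a, a < f z -> exists2 r, 0 < r &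
  forall w, S1 w -> `|w.1 - z.1| < r -> `|w.2 - z.2| < r -> a < f w.

Lemma lsc_lb z a : S1 z ->
  (exists2 r, 0 < r & forall w, S1 w -> `|w.1 - z.1| < r -> `|w.2 - z.2| < r -> a < phi w) ->
  exists c, Bc phi c /\ affine_ev c z = a.
Proof.
move=> hz [r r0 hr].
set K := 2 * (`|a| + `|m|) / r ^+ 2.
have r2 : 0 < r ^+ 2 by rewrite exprn_gt0.
have K0 : 0 <= K by rewrite /K divr_ge0 ?mulr_ge0 ?addr_ge0 // ltW.
have hK : K * r ^+ 2 = 2 * (`|a| + `|m|) by rewrite /K; field; lra.
exists ((a - K, K * z.1), K * z.2); split; last first.
  rewrite /affine_ev /t0 /t1 /t2 /=; move: hz; rewrite /S1 /= => hz.
  have -> : a - K + K * z.1 * z.1 + K * z.2 * z.2 = a - K + K * (z.1 ^+ 2 + z.2 ^+ 2) by ring.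
  by rewrite hz; ring.
move=> w hw; move: (hw) hz; rewrite /S1 /= => hw' hz.
have -> : affine_ev ((a - K, K * z.1), K * z.2) w =
   a - K / 2 * ((w.1 - z.1) ^+ 2 + (w.2 - z.2) ^+ 2).
  rewrite /affine_ev /t0 /t1 /t2 /=.
  have -> : (w.1 - z.1) ^+ 2 + (w.2 - z.2) ^+ 2 =
     (w.1 ^+ 2 + w.2 ^+ 2) + (z.1 ^+ 2 + z.2 ^+ 2) - 2 * (w.1 * z.1 + w.2 * z.2) by ring.
  by rewrite hw' hz; field.
set S := (w.1 - z.1) ^+ 2 + (w.2 - z.2) ^+ 2.
have sq0 : 0 <= S by apply: addr_ge0; exact: sqr_ge0.
have -> : K / 2 * S = (K * S) / 2 by field.
have far : r ^+ 2 <= S -> a - (K * S) / 2 <= phi w.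
  move=> hS; have := ler_wpM2l K0 hS; rewrite hK => h1.
  have := hm hw; have := ler_norm a; have := ler_norm (- m); rewrite normrN; lra.
have KS : 0 <= K * S by apply: mulr_ge0.
case: (boolP (`|w.1 - z.1| < r)) => n1; case: (boolP (`|w.2 - z.2| < r)) => n2;
  rewrite -?leNgt in n1 n2.
- have := hr w hw n1 n2; lra.
- apply: far; have : r ^+ 2 <= (w.2 - z.2) ^+ 2.
    by rewrite -[X in _ <= X]real_normK ?num_real // lerXn2r ?nnegrE // ltW.
  have := sqr_ge0 (w.1 - z.1); rewrite /S; lra.
- apply: far; have : r ^+ 2 <= (w.1 - z.1) ^+ 2.
    by rewrite -[X in _ <= X]real_normK ?num_real // lerXn2r ?nnegrE // ltW.
  have := sqr_ge0 (w.2 - z.2); rewrite /S; lra.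
- apply: far; have : r ^+ 2 <= (w.1 - z.1) ^+ 2.
    by rewrite -[X in _ <= X]real_normK ?num_real // lerXn2r ?nnegrE // ltW.
  have := sqr_ge0 (w.2 - z.2); rewrite /S; lra.
Qed.

End Minus2.

Section Minus3.
Variable R : realType.
Implicit Types (z w x y xi eta : R * R) (c : R * R * R).

Lemma lin_small (c1 c2 d1 d2 rho : R) : `|d1| < rho -> `|d2| < rho ->
  `|c1 * d1 + c2 * d2| <= (`|c1| + `|c2|) * rho.
Proof.
move=> h1 h2; apply: le_trans (ler_normD _ _) _; rewrite !normrM mulrDl.
by apply: lerD; apply: ler_wpM2l => //; apply: ltW.
Qed.

Lemma aff_diff c xi z : affine_ev c xi - affine_ev c z =
  t1 c * (xi.1 - z.1) + t2 c * (xi.2 - z.2).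
Proof. rewrite /affine_ev; ring. Qed.

Variables (phi : R * R -> R) (m : R).
Hypothesis hm : forall z, S1 z -> m <= phi z.

Lemma pm_lower z : S1 z -> lscE phi z -> forall e, 0 < e ->
  exists2 rho, 0 < rho & forall xi, D2 xi -> `|xi.1 - z.1| < rho -> `|xi.2 - z.2| < rho ->
    phi z - e < phi_minus phi xi.
Proof.
move=> hz hl e e0.
have [r r0 hr] := hl (phi z - e / 2) ltac:(lra).
have [c [hc hcz]] := lsc_lb hm hz (ex_intro2 _ _ r r0 hr).
set L := `|t1 c| + `|t2 c|.
have L0 : 0 <= L by rewrite /L addr_ge0.
set q := e / (2 * (L + 1)).
have q0 : 0 < q by rewrite /q divr_gt0 // mulr_gt0 //; lra.
have hq : q * (2 * (L + 1)) = e by rewrite /q; field; lra.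
exists q => // xi hxi h1 h2.
have := lin_small (t1 c) (t2 c) h1 h2; rewrite -aff_diff hcz -/L => hb.
have hL : L * q < e / 2 by nra.
have := pm_ge hm hxi hc.
have := ler_norm (- (affine_ev c xi - (phi z - e / 2))); rewrite normrN.
lra.
Qed.

End Minus3.

Section Topo.
Variable R : realType.
Implicit Types (z w x y xi eta : R * R) (c : R * R * R).

Lemma nb z (P : set (R * R)) : nbhs z P -> exists2 r : R, 0 < r &
  forall w : R * R, `|w.1 - z.1| < r -> `|w.2 - z.2| < r -> P w.
Proof.
move=> /nbhs_ballP [r r0 H]. exists r => // w h1 h2; apply: H.
by split => /=; rewrite /ball /= distrC.
Qed.

Lemma nb2 z (r : R) : 0 < r ->
  nbhs z (fun w : R * R => `|w.1 - z.1| < r /\ `|w.2 - z.2| < r).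
Proof.
move=> r0; apply/nbhs_ballP; exists r => // w [h1 h2]; move: h1 h2.
by rewrite /ball /= => h1 h2; split; rewrite distrC.
Qed.

Lemma nb3 (p : R * R * R) (r : R) : 0 < r ->
  nbhs p (fun c : R * R * R => `|t0 c - t0 p| < r /\ `|t1 c - t1 p| < r /\ `|t2 c - t2 p| < r).
Proof.
move=> r0; apply/nbhs_ballP; exists r => // w [[h1 h2] h3]; move: h1 h2 h3.
rewrite /ball /t0 /t1 /t2 /= => h1 h2 h3.
by split; [|split]; rewrite distrC.
Qed.

Lemma cluster_nested {T : topologicalType} (K : set T) (B : nat -> set T) :
  compact K -> (forall n, B n !=set0) -> (forall n, B n `<=` K) ->
  (forall n, B n.+1 `<=` B n) ->
  exists p, K p /\ forall n U, nbhs p U -> (B n `&` U) !=set0.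
Proof.
move=> cK ne sK nest.
have mono : forall n k, (n <= k)%N -> B k `<=` B n.
  move=> n k /subnK <-; elim: (k - n)%N => [|j ih] //=.
  by rewrite addSn; apply: subset_trans (nest _) ih.
have FF : Filter (filter_from setT B).
  apply: filter_fromT_filter; first by exists 0%N.
  move=> i j; exists (maxn i j) => x Bx; split.
    by apply: (mono i (maxn i j)) => //; rewrite leq_maxl.
  by apply: (mono j (maxn i j)) => //; rewrite leq_maxr.
have PF : ProperFilter (filter_from setT B).
  by apply: filter_from_proper => i _; exact: ne.
have [p [Kp cp]] := cK _ PF (ex_intro2 _ _ 0%N I (sK 0%N)).
exists p; split => // n U hU; apply: cp => //; by exists n.
Qed.

End Topo.

Section LB.
Variable R : realType.
Implicit Types (z w x y xi eta : R * R) (c : R * R * R).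

Lemma box_compact (L : R) : compact (`[-L, L]%classic `*` `[-L, L]%classic).
Proof. by apply: compact_setX; apply: segment_compact. Qed.

Lemma in_box (L a : R) : `|a| <= L -> `[-L, L]%classic a.
Proof. by move=> h; rewrite /= in_itv /= -ler_norml. Qed.

Lemma lsc_bounded (phi : R * R -> R) : (forall z, S1 z -> lscE phi z) ->
  exists m, forall z, S1 z -> m <= phi z.
Proof.
move=> hl; apply: contrapT => hne.
have ex : forall n : nat, exists w, S1 w /\ phi w < - n%:R.
  move=> n; apply: contrapT => h; apply: hne; exists (- n%:R) => z hz.
  rewrite leNgt; apply/negP => hlt; apply: h; by exists z.
pose B n := [set w | S1 w /\ phi w < - n%:R].
pose K : set (R * R) := `[-1, 1]%classic `*` `[-1, 1]%classic.
have [p [Kp cp]] : exists p, K p /\ forall n U, nbhs p U -> (B n `&` U) !=set0.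
  apply: (@cluster_nested _ K B (@box_compact 1) ex).
    move=> n w [hw _]; move: (hw); rewrite /S1 /= => hw'.
    by split; apply: in_box; [apply: (@sq_le1 _ w.1 w.2) | apply: (@sq_le1 _ w.2 w.1)]; lra.
  move=> n w [hw h]; split => //; apply: lt_le_trans h _.
  by rewrite lerN2 ler_nat.
have Sp : S1 p.
  apply: contrapT => hp.
  have gp : 0 < `|nn p - 1|.
    by rewrite normr_gt0 subr_eq0; apply/eqP; move: hp; rewrite /S1 /nn /=.
  set L := 2 * `|p.1| + 2 * `|p.2| + 3.
  have L0 : 0 < L by rewrite /L; have := normr_ge0 p.1; have := normr_ge0 p.2; lra.
  set rho := Num.min 1 (`|nn p - 1| / L).
  have r0 : 0 < rho by rewrite /rho lt_min ltr01 divr_gt0.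
  have r1 : rho <= 1 by rewrite /rho ge_min lexx.
  have r2 : rho * L <= `|nn p - 1|.
    by rewrite -ler_pdivlMr // /rho ge_min lexx orbT.
  have [w [[hw _] [h1 h2]]] := cp 0%N _ (nb2 p r0).
  have e : nn w - nn p = (w.1 + p.1) * (w.1 - p.1) + (w.2 + p.2) * (w.2 - p.2).
    by rewrite /nn; ring.
  have := lin_small (w.1 + p.1) (w.2 + p.2) h1 h2; rewrite -e.
  move: hw; rewrite /S1 /= => hw; rewrite /nn hw -/(nn p).
  have b1 : `|w.1 + p.1| <= 1 + 2 * `|p.1|.
    have -> : w.1 + p.1 = (w.1 - p.1) + 2 * p.1 by ring.
    by apply: le_trans (ler_normD _ _) _; rewrite normrM ger0_norm //; lra.
  have b2 : `|w.2 + p.2| <= 1 + 2 * `|p.2|.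
    have -> : w.2 + p.2 = (w.2 - p.2) + 2 * p.2 by ring.
    by apply: le_trans (ler_normD _ _) _; rewrite normrM ger0_norm //; lra.
  rewrite -normrN opprB => hh.
  have : (`|w.1 + p.1| + `|w.2 + p.2|) * rho <= (L - 1) * rho.
    by apply: ler_wpM2r; [lra | rewrite /L; lra].
  nra.
have [r r0 hr] := hl p Sp (phi p - 1) ltac:(lra).
have a0 : 0 <= `|phi p| + 1 by have := normr_ge0 (phi p); lra.
have := archi_boundP a0; set n := Num.Def.archi_bound _ => hn.
have [w [[hw hwn] [h1 h2]]] := cp n _ (nb2 p r0).
have := hr w hw h1 h2; have := ler_norm (- phi p); rewrite normrN; lra.
Qed.


End LB.

Section Support.
Variable R : realType.
Implicit Types (z w x y xi eta : R * R) (c s : R * R * R).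
Variables (phi : R * R -> R) (m : R).
Hypothesis hm : forall z, S1 z -> m <= phi z.

Local Notation pm := (phi_minus phi).

Definition sig_of c : R * R * R := ((- t0 c, t1 c), t2 c).

Lemma mink_sig c xi : mink (lift1 xi) (sig_of c) = affine_ev c xi.
Proof. rewrite /mink /lift1 /sig_of /affine_ev /t0 /t1 /t2 /=; ring. Qed.

Lemma mink_lift s xi : mink (lift1 xi) s = - t0 s + t1 s * xi.1 + t2 s * xi.2.
Proof. rewrite /mink /lift1 /t0 /t1 /t2 /=; ring. Qed.

Lemma sig_slope s eta xi : Sigma_minus phi eta s -> D2 xi ->
  t1 s * (xi.1 - eta.1) + t2 s * (xi.2 - eta.2) <= pm xi - pm eta.
Proof.
move=> [h1 h2] hx; rewrite -h2; have := h1 xi hx; rewrite !mink_lift; lra.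
Qed.

Definition rr eta : R := (1 - nn eta) / 4.
Definition P1 eta (e : R) : R * R := (eta.1 + rr eta * e, eta.2).
Definition P2 eta (e : R) : R * R := (eta.1, eta.2 + rr eta * e).
Definition Mb eta : R := `|pm (P1 eta 1)| + `|pm (P1 eta (-1))| +
  `|pm (P2 eta 1)| + `|pm (P2 eta (-1))| + `|pm eta| + 1.
Definition Kb eta : R := 2 * Mb eta / rr eta.

Lemma rr_gt0 eta : D2 eta -> 0 < rr eta.
Proof. by rewrite /D2 /rr /nn /= => h; lra. Qed.

Lemma P1_D2 eta e : D2 eta -> `|e| <= 1 -> D2 (P1 eta e).
Proof. exact: D2_disp1. Qed.
Lemma P2_D2 eta e : D2 eta -> `|e| <= 1 -> D2 (P2 eta e).
Proof. exact: D2_disp2. Qed.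

Lemma slope_bound eta (a1 a2 : R) : D2 eta ->
  (forall xi, D2 xi -> a1 * (xi.1 - eta.1) + a2 * (xi.2 - eta.2) <= pm xi - pm eta + 1) ->
  `|a1| <= Kb eta /\ `|a2| <= Kb eta.
Proof.
move=> he h.
have r0 := rr_gt0 he.
have n1 : `|(1 : R)| <= 1 by rewrite normr1.
have n2 : `|(-1 : R)| <= 1 by rewrite normrN normr1.
have h1 := h _ (P1_D2 he n1); have h2 := h _ (P1_D2 he n2).
have h3 := h _ (P2_D2 he n1); have h4 := h _ (P2_D2 he n2).
move: h1 h2 h3 h4; rewrite /P1 /P2 /=.
have -> : eta.1 + rr eta * 1 - eta.1 = rr eta by ring.
have -> : eta.1 + rr eta * -1 - eta.1 = - rr eta by ring.
have -> : eta.2 + rr eta * 1 - eta.2 = rr eta by ring.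
have -> : eta.2 + rr eta * -1 - eta.2 = - rr eta by ring.
rewrite !subrr !mulr0 !addr0 !add0r.
rewrite -/(P1 eta 1) -/(P1 eta (-1)) -/(P2 eta 1) -/(P2 eta (-1)).
have b1 := ler_norm (pm (P1 eta 1)); have b2 := ler_norm (pm (P1 eta (-1))).
have b3 := ler_norm (pm (P2 eta 1)); have b4 := ler_norm (pm (P2 eta (-1))).
have b5 := ler_norm (- pm eta); rewrite normrN in b5.
have c1 := normr_ge0 (pm (P1 eta 1)); have c2 := normr_ge0 (pm (P1 eta (-1))).
have c3 := normr_ge0 (pm (P2 eta 1)); have c4 := normr_ge0 (pm (P2 eta (-1))).
have c5 := normr_ge0 (pm eta).
have hK : Kb eta * rr eta = 2 * Mb eta by rewrite /Kb; field; lra.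
rewrite /Mb in hK.
move=> h1 h2 h3 h4; split.
- have : `|a1| * rr eta <= Kb eta * rr eta.
    rewrite hK; case: (ler0P a1) => ha.
      by rewrite mulNr; rewrite !mulrN in h2 h4; lra.
    lra.
  by rewrite ler_pM2r.
- have : `|a2| * rr eta <= Kb eta * rr eta.
    rewrite hK; case: (ler0P a2) => ha.
      by rewrite mulNr; rewrite !mulrN in h2 h4; lra.
    lra.
  by rewrite ler_pM2r.
Qed.

End Support.

Section Support2.
Variable R : realType.
Implicit Types (z w x y xi eta : R * R) (c s : R * R * R).
Variables (phi : R * R -> R) (m : R).
Hypothesis hm : forall z, S1 z -> m <= phi z.

Local Notation pm := (phi_minus phi).

Lemma aff_close c p xi (rho : R) : `|t0 c - t0 p| < rho -> `|t1 c - t1 p| < rho ->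
  `|t2 c - t2 p| < rho -> `|affine_ev c xi - affine_ev p xi| <= rho * (1 + `|xi.1| + `|xi.2|).
Proof.
move=> h0 h1 h2.
have -> : affine_ev c xi - affine_ev p xi =
  (t0 c - t0 p) + ((t1 c - t1 p) * xi.1 + (t2 c - t2 p) * xi.2) by rewrite /affine_ev; ring.
apply: le_trans (ler_normD _ _) _.
have := lin_small xi.1 xi.2 h1 h2.
rewrite [X in `|X| <= _ -> _](_ : _ = (t1 c - t1 p) * xi.1 + (t2 c - t2 p) * xi.2); last by ring.
move=> h.
have -> : rho * (1 + `|xi.1| + `|xi.2|) = rho + (`|xi.1| + `|xi.2|) * rho by ring.
lra.
Qed.

Lemma inv_small (e : R) : 0 < e -> exists n : nat, (n.+1%:R)^-1 < e.
Proof.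
move=> e0; have a0 : 0 <= e^-1 by rewrite invr_ge0 ltW.
have := archi_boundP a0; set n := Num.Def.archi_bound _ => hn.
exists n; rewrite -(invrK e) ltf_pV2 ?posrE ?invr_gt0 ?ltr0Sn //.
by apply: lt_le_trans hn _; rewrite ler_nat.
Qed.

Lemma sig_exists eta : D2 eta -> exists s, Sigma_minus phi eta s.
Proof.
move=> he.
set K := Kb phi eta.
set L := `|pm eta| + 2 + 3 * K.
pose B n := [set c | Bc phi c /\ pm eta - (n.+1%:R)^-1 < affine_ev c eta].
pose Ks : set (R * R * R) := (`[-L, L]%classic `*` `[-L, L]%classic) `*` `[-L, L]%classic.
have cK : compact Ks by apply: compact_setX; [exact: box_compact | exact: segment_compact].
have ne : forall n, B n !=set0.
  move=> n; have ep : 0 < (n.+1%:R : R)^-1 by rewrite invr_gt0 ltr0Sn.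
  have [y [c [hc ->]] hy] := sup_adherent ep (Aset_sup hm he).
  by exists c.
have inv1 : forall n : nat, (n.+1%:R : R)^-1 <= 1.
  by move=> n; rewrite invr_le1 ?ler1n ?unitfE ?pnatr_eq0 ?ltr0Sn.
have sub : forall n, B n `<=` Ks.
  move=> n c [hc hce].
  have i1 : pm eta - 1 < affine_ev c eta.
    by apply: le_lt_trans hce; apply: lerB => //; exact: inv1.
  have hs : forall xi, D2 xi ->
      t1 c * (xi.1 - eta.1) + t2 c * (xi.2 - eta.2) <= pm xi - pm eta + 1.
    move=> xi hxi; have := pm_ge hm hxi hc.
    have -> : t1 c * (xi.1 - eta.1) + t2 c * (xi.2 - eta.2) =
      affine_ev c xi - affine_ev c eta by rewrite /affine_ev; ring.
    lra.
  have [k1 k2] := slope_bound he hs; rewrite -/K in k1 k2.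
  have K0 : 0 <= K by apply: le_trans k1; exact: normr_ge0.
  have ae : `|affine_ev c eta| <= `|pm eta| + 1.
    have h1 := pm_ge hm he hc; have h2 := ler_norm (pm eta).
    have h3 := ler_norm (- pm eta); rewrite normrN in h3.
    rewrite ler_norml; apply/andP; split; lra.
  have he1 : `|eta.1| <= 1 by apply: (@sq_le1 _ eta.1 eta.2); move: he; rewrite /D2 /=; lra.
  have he2 : `|eta.2| <= 1 by apply: (@sq_le1 _ eta.2 eta.1); move: he; rewrite /D2 /=; lra.
  have m1 : `|t1 c * eta.1| <= K.
    by rewrite normrM; apply: le_trans (ler_wpM2l (normr_ge0 _) he1) _; rewrite mulr1.
  have m2 : `|t2 c * eta.2| <= K.
    by rewrite normrM; apply: le_trans (ler_wpM2l (normr_ge0 _) he2) _; rewrite mulr1.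
  have c0 : t0 c = affine_ev c eta - t1 c * eta.1 - t2 c * eta.2 by rewrite /affine_ev; ring.
  split; [split|]; apply: in_box.
  - rewrite -/(t0 c) c0; apply: le_trans (ler_normB _ _) _.
    apply: le_trans (lerD (ler_normB _ _) (lexx _)) _.
    rewrite /L; lra.
  - by rewrite -/(t1 c) /L; have := normr_ge0 (pm eta); lra.
  - by rewrite -/(t2 c) /L; have := normr_ge0 (pm eta); lra.
have nest : forall n, B n.+1 `<=` B n.
  move=> n c [hc hce]; split => //; apply: le_lt_trans hce.
  apply: lerB => //; rewrite lef_pV2 ?posrE ?ltr0Sn // ler_nat; exact: leqnSn.
have [p [Kp cp]] := cluster_nested cK ne sub nest.
have cl1 : forall xi, D2 xi -> affine_ev p xi <= pm xi.
  move=> xi hxi; rewrite leNgt; apply/negP => hlt.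
  set e := affine_ev p xi - pm xi.
  have e0 : 0 < e by rewrite /e subr_gt0.
  set N := 1 + `|xi.1| + `|xi.2|.
  have N0 : 0 < N by rewrite /N; have := normr_ge0 xi.1; have := normr_ge0 xi.2; lra.
  set rho := e / (2 * N).
  have r0 : 0 < rho by rewrite /rho divr_gt0 // mulr_gt0.
  have hrN : rho * N = e / 2 by rewrite /rho; field; lra.
  have [c [[hc _] [h0 [h1 h2]]]] := cp 0%N _ (nb3 p r0).
  have := aff_close xi h0 h1 h2; rewrite -/N hrN.
  have := pm_ge hm hxi hc; have := ler_norm (- (affine_ev c xi - affine_ev p xi)).
  rewrite normrN; rewrite /e; lra.
have cl2 : pm eta <= affine_ev p eta.
  rewrite leNgt; apply/negP => hlt.
  set e := pm eta - affine_ev p eta.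
  have e0 : 0 < e by rewrite /e subr_gt0.
  have [n hn] := inv_small (e := e / 2) ltac:(lra).
  set N := 1 + `|eta.1| + `|eta.2|.
  have N0 : 0 < N by rewrite /N; have := normr_ge0 eta.1; have := normr_ge0 eta.2; lra.
  set rho := e / (2 * N).
  have r0 : 0 < rho by rewrite /rho divr_gt0 // mulr_gt0.
  have hrN : rho * N = e / 2 by rewrite /rho; field; lra.
  have [c [[hc hce] [h0 [h1 h2]]]] := cp n _ (nb3 p r0).
  have := aff_close eta h0 h1 h2; rewrite -/N hrN.
  have i2 : pm eta - e / 2 < affine_ev c eta.
    by apply: le_lt_trans hce; rewrite lerD2l lerN2 ltW.
  have := ler_norm (affine_ev c eta - affine_ev p eta).
  rewrite /e in i2 *; lra.
exists (sig_of p); split.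
  by move=> xi hxi; rewrite mink_sig; apply: cl1.
by rewrite mink_sig; apply/eqP; rewrite eq_le cl1 // cl2.
Qed.

End Support2.

Section NoTri.
Variable R : realType.
Implicit Types (z w x y xi eta : R * R) (c s : R * R * R).

Lemma cs_dist z eta : S1 z -> nn eta <= 1 ->
  (1 - nn eta) ^+ 2 <= 4 * ((z.1 - eta.1) ^+ 2 + (z.2 - eta.2) ^+ 2).
Proof.
rewrite /S1 /nn /= => hz he.
set a1 := z.1 - eta.1; set a2 := z.2 - eta.2.
set b1 := z.1 + eta.1; set b2 := z.2 + eta.2.
have e1 : 1 - (eta.1 ^+ 2 + eta.2 ^+ 2) = a1 * b1 + a2 * b2 by rewrite -hz /a1 /a2 /b1 /b2; ring.
have e2 : (a1 * b1 + a2 * b2) ^+ 2 + (a1 * b2 - a2 * b1) ^+ 2 =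
   (a1 ^+ 2 + a2 ^+ 2) * (b1 ^+ 2 + b2 ^+ 2) by ring.
have e3 : b1 ^+ 2 + b2 ^+ 2 + (a1 ^+ 2 + a2 ^+ 2) = 2 * (z.1 ^+ 2 + z.2 ^+ 2) + 2 * (eta.1 ^+ 2 + eta.2 ^+ 2).
  by rewrite /a1 /a2 /b1 /b2; ring.
have hb : b1 ^+ 2 + b2 ^+ 2 <= 4.
  by move: e3; rewrite hz; have := sqr_ge0 a1; have := sqr_ge0 a2; lra.
rewrite e1.
have := sqr_ge0 (a1 * b2 - a2 * b1).
have ha : 0 <= a1 ^+ 2 + a2 ^+ 2 by apply: addr_ge0; exact: sqr_ge0.
have := ler_wpM2l ha hb.
nra.
Qed.

Variables (phi : R * R -> R) (m : R).
Hypothesis hm : forall z, S1 z -> m <= phi z.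
Local Notation pm := (phi_minus phi).

Lemma sig_aff s eta xi : Sigma_minus phi eta s ->
  mink (lift1 xi) s = pm eta + (t1 s * (xi.1 - eta.1) + t2 s * (xi.2 - eta.2)).
Proof. move=> [_ <-]; rewrite !mink_lift; ring. Qed.

Lemma no_tri eta s0 s1 s2 : D2 eta -> Sigma_minus phi eta s0 ->
  Sigma_minus phi eta s1 -> Sigma_minus phi eta s2 ->
  (t1 s1 - t1 s0) * (t2 s2 - t2 s0) - (t2 s1 - t2 s0) * (t1 s2 - t1 s0) != 0 -> False.
Proof.
move=> he h0 h1 h2 hD.
set D := (t1 s1 - t1 s0) * (t2 s2 - t2 s0) - (t2 s1 - t2 s0) * (t1 s2 - t1 s0) in hD.
set C := `|t1 s1 - t1 s0| + `|t2 s1 - t2 s0| + `|t1 s2 - t1 s0| + `|t2 s2 - t2 s0|.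
have C0 : 0 <= C by rewrite /C !addr_ge0.
set tau := (1 - nn eta) ^+ 2 / 16.
have he' : nn eta < 1 by move: he; rewrite /D2.
have tau0 : 0 < tau by rewrite /tau divr_gt0 // exprn_gt0 // subr_gt0.
have D2p : 0 < D ^+ 2 by rewrite lt_def sqr_ge0 andbT sqrf_eq0.
set g1 := (t1 s0 + t1 s1 + t1 s2) / 3.
set g2 := (t2 s0 + t2 s1 + t2 s2) / 3.
set Q := D ^+ 2 * tau / (64 * (C + 1) ^+ 2).
have C1 : 0 < (C + 1) ^+ 2 by rewrite exprn_gt0 //; lra.
have hQ : Q * (64 * (C + 1) ^+ 2) = D ^+ 2 * tau.
  by rewrite /Q divfK // gt_eqF // mulr_gt0.
have Q0 : 0 < Q by rewrite /Q; apply: divr_gt0; apply: mulr_gt0.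
set dl := Num.min 1 Q.
have dl0 : 0 < dl by rewrite /dl lt_min ltr01.
have dl1 : dl <= 1 by rewrite /dl ge_min lexx.
have dl2 : dl <= Q by rewrite /dl ge_min lexx orbT.
set v := pm eta.
pose b : R * R * R := ((v - g1 * eta.1 - g2 * eta.2 + dl, g1), g2).
have affb : forall xi, affine_ev b xi = v + (g1 * (xi.1 - eta.1) + g2 * (xi.2 - eta.2)) + dl.
  by move=> xi; rewrite /affine_ev /b /t0 /t1 /t2 /=; ring.
have claimA : forall xi, D2 xi -> tau <= (xi.1 - eta.1) ^+ 2 + (xi.2 - eta.2) ^+ 2 ->
    affine_ev b xi <= pm xi.
  move=> xi hxi hd; rewrite affb.
  set d1 := xi.1 - eta.1 in hd *; set d2 := xi.2 - eta.2 in hd *.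
  have A0 := h0.1 xi hxi; rewrite (sig_aff xi h0) -/v -/d1 -/d2 in A0.
  have A1 := h1.1 xi hxi; rewrite (sig_aff xi h1) -/v -/d1 -/d2 in A1.
  have A2 := h2.1 xi hxi; rewrite (sig_aff xi h2) -/v -/d1 -/d2 in A2.
  set x0 := t1 s0 * d1 + t2 s0 * d2 in A0.
  set x1 := t1 s1 * d1 + t2 s1 * d2 in A1.
  set x2 := t1 s2 * d1 + t2 s2 * d2 in A2.
  set y := g1 * d1 + g2 * d2.
  have hsum : x0 + x1 + x2 = 3 * y by rewrite /x0 /x1 /x2 /y /g1 /g2; field.
  case: (boolP (dl <= x0 - y)) => c0; first by lra.
  case: (boolP (dl <= x1 - y)) => c1; first by lra.
  case: (boolP (dl <= x2 - y)) => c2; first by lra.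
  exfalso; rewrite -ltNge in c0 c1 c2.
  set y1 := x1 - x0. set y2 := x2 - x0.
  have hy1 : `|y1| <= 3 * dl by rewrite ler_norml; apply/andP; split; rewrite /y1; lra.
  have hy2 : `|y2| <= 3 * dl by rewrite ler_norml; apply/andP; split; rewrite /y2; lra.
  have i1 : D * d1 = y1 * (t2 s2 - t2 s0) - y2 * (t2 s1 - t2 s0).
    by rewrite /D /y1 /y2 /x0 /x1 /x2; ring.
  have i2 : D * d2 = - (y1 * (t1 s2 - t1 s0) - y2 * (t1 s1 - t1 s0)).
    by rewrite /D /y1 /y2 /x0 /x1 /x2; ring.
  have nb : forall (u1 u2 a1 a2 : R), `|u1| <= 3 * dl -> `|u2| <= 3 * dl ->
      `|u1 * a1 - u2 * a2| <= 3 * dl * (`|a1| + `|a2|).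
    move=> u1 u2 a1 a2 hu1 hu2; apply: le_trans (ler_normB _ _) _.
    rewrite !normrM mulrDr; apply: lerD; apply: ler_wpM2r => //.
  have k1 := nb _ _ (t2 s2 - t2 s0) (t2 s1 - t2 s0) hy1 hy2; rewrite -i1 in k1.
  have k2 := nb _ _ (t1 s2 - t1 s0) (t1 s1 - t1 s0) hy1 hy2.
  rewrite -[X in `|X|]opprK -i2 normrN in k2.
  have k1' : `|D * d1| <= 3 * dl * C.
    apply: le_trans k1 _; apply: ler_wpM2l; first lra.
    by rewrite /C; have := normr_ge0 (t1 s1 - t1 s0); have := normr_ge0 (t1 s2 - t1 s0); lra.
  have k2' : `|D * d2| <= 3 * dl * C.
    apply: le_trans k2 _; apply: ler_wpM2l; first lra.
    by rewrite /C; have := normr_ge0 (t2 s1 - t2 s0); have := normr_ge0 (t2 s2 - t2 s0); lra.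
  have sq1 : (D * d1) ^+ 2 <= (3 * dl * C) ^+ 2.
    by rewrite -real_normK ?num_real // lerXn2r ?nnegrE //; nra.
  have sq2 : (D * d2) ^+ 2 <= (3 * dl * C) ^+ 2.
    by rewrite -real_normK ?num_real // lerXn2r ?nnegrE //; nra.
  have hT : D ^+ 2 * tau <= D ^+ 2 * (d1 ^+ 2 + d2 ^+ 2) by apply: ler_wpM2l => //; exact: sqr_ge0.
  have e3 : D ^+ 2 * (d1 ^+ 2 + d2 ^+ 2) = (D * d1) ^+ 2 + (D * d2) ^+ 2 by ring.
  have dlsq : dl ^+ 2 <= Q by nra.
  have hC : C ^+ 2 <= (C + 1) ^+ 2 by nra.
  have : (3 * dl * C) ^+ 2 <= 9 * (Q * (C + 1) ^+ 2).
    have -> : (3 * dl * C) ^+ 2 = 9 * (dl ^+ 2 * C ^+ 2) by ring.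
    rewrite ler_pM2l //; apply: le_trans (ler_wpM2r (sqr_ge0 C) dlsq) _.
    by apply: ler_wpM2l => //; lra.
  have : D ^+ 2 * tau > 0 by rewrite mulr_gt0.
  lra.
have claimB : Bc phi b.
  move=> z hz; apply: (radial_bd hm (x := eta) hz he) => s sp0 sp1.
  have hp : D2 (ps s z eta) by apply: D2_ps => //; apply/andP; split; [lra|]; apply: le_trans sp1 _; rewrite invr_le1 ?ler1n // unitfE.
  apply: claimA => //.
  have -> : (ps s z eta).1 - eta.1 = (1 - s) * (z.1 - eta.1) by rewrite /ps /=; ring.
  have -> : (ps s z eta).2 - eta.2 = (1 - s) * (z.2 - eta.2) by rewrite /ps /=; ring.
  have := cs_dist hz (ltW he').
  have hs : 1 / 4 <= (1 - s) ^+ 2 by nra.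
  rewrite /tau => hc.
  have hz2 : 0 <= (z.1 - eta.1) ^+ 2 + (z.2 - eta.2) ^+ 2 by apply: addr_ge0; exact: sqr_ge0.
  have -> : ((1 - s) * (z.1 - eta.1)) ^+ 2 + ((1 - s) * (z.2 - eta.2)) ^+ 2 =
    (1 - s) ^+ 2 * ((z.1 - eta.1) ^+ 2 + (z.2 - eta.2) ^+ 2) by ring.
  nra.
have := pm_ge hm he claimB; rewrite affb !subrr !mulr0 !addr0 -/v; lra.
Qed.

End NoTri.

Section Seg.
Variable R : realType.
Implicit Types (z w x y xi eta : R * R) (c s p q : R * R * R).

Lemma triple_eq p q : t0 p = t0 q -> t1 p = t1 q -> t2 p = t2 q -> p = q.
Proof. by case: p => [[? ?] ?]; case: q => [[? ?] ?]; rewrite /t0 /t1 /t2 /= => -> -> ->. Qed.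

Lemma t0_comb (t : R) p q : t0 (comb3 t p q) = (1 - t) * t0 p + t * t0 q. Proof. by []. Qed.
Lemma t1_comb (t : R) p q : t1 (comb3 t p q) = (1 - t) * t1 p + t * t1 q. Proof. by []. Qed.
Lemma t2_comb (t : R) p q : t2 (comb3 t p q) = (1 - t) * t2 p + t * t2 q. Proof. by []. Qed.

Lemma mink_comb (t : R) p q xi :
  mink (lift1 xi) (comb3 t p q) = (1 - t) * mink (lift1 xi) p + t * mink (lift1 xi) q.
Proof. rewrite !mink_lift t0_comb t1_comb t2_comb; ring. Qed.

Lemma comb3_same (t : R) p : comb3 t p p = p.
Proof. by apply: triple_eq; rewrite ?t0_comb ?t1_comb ?t2_comb; ring. Qed.

Lemma comb3_comb (u a b : R) p q :
  comb3 u (comb3 a p q) (comb3 b p q) = comb3 ((1 - u) * a + u * b) p q.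
Proof. by apply: triple_eq; rewrite ?t0_comb ?t1_comb ?t2_comb; ring. Qed.

Lemma comb3_0 p q : comb3 0 p q = p.
Proof. by apply: triple_eq; rewrite ?t0_comb ?t1_comb ?t2_comb; ring. Qed.
Lemma comb3_1 p q : comb3 1 p q = q.
Proof. by apply: triple_eq; rewrite ?t0_comb ?t1_comb ?t2_comb; ring. Qed.

Variables (phi : R * R -> R) (m : R).
Hypothesis hm : forall z, S1 z -> m <= phi z.
Local Notation pm := (phi_minus phi).
Local Notation Sig := (Sigma_minus phi).

Lemma sig_eq eta s s' : Sig eta s -> mink (lift1 eta) s' = pm eta ->
  t1 s = t1 s' -> t2 s = t2 s' -> s = s'.
Proof.
move=> [_ h] h' e1 e2; apply: triple_eq => //.
move: h h'; rewrite !mink_lift e1 e2 => <-; lra.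
Qed.

Lemma sig_conv eta s s' (t : R) : Sig eta s -> Sig eta s' -> 0 <= t <= 1 ->
  Sig eta (comb3 t s s').
Proof.
move=> [h1 e1] [h2 e2] /andP[t0 t1]; split.
  move=> xi hxi; rewrite mink_comb.
  have := h1 xi hxi; have := h2 xi hxi; nra.
by rewrite mink_comb e1 e2; ring.
Qed.

Lemma sig_bound eta s : D2 eta -> Sig eta s -> `|t1 s| <= Kb phi eta /\ `|t2 s| <= Kb phi eta.
Proof.
move=> he hs; apply: slope_bound => // xi hxi.
have := sig_slope hs hxi; lra.
Qed.

Lemma mid_in S : (exists p q, S = segment3 p q) -> S (midpt S).
Proof.
move=> [p [q hS]].
have : is_midpoint_of S (midpt S) by apply: xgetPex; exists (comb3 (2^-1) p q), p, q.
move=> [p' [q' [-> ->]]]; exists (2^-1) => //=; apply/andP; split.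
  by rewrite invr_ge0 ler0n.
by rewrite invr_le1 ?ler1n // unitfE.
Qed.

End Seg.

Section Seg2.
Variable R : realType.
Implicit Types (z w x y xi eta : R * R) (c s p q : R * R * R).
Variables (phi : R * R -> R) (m : R).
Hypothesis hm : forall z, S1 z -> m <= phi z.
Local Notation pm := (phi_minus phi).
Local Notation Sig := (Sigma_minus phi).

Lemma sig_segment eta : D2 eta -> exists p q, Sig eta = segment3 p q.
Proof.
move=> he.
have [s0 h0] := sig_exists hm he.
case: (pselect (exists s, Sig eta s /\ s <> s0)) => [[s1 [h1 ne]]|hno]; last first.
  exists s0, s0; apply/seteqP; split => x.
    move=> hx; have -> : x = s0.
      by apply: contrapT => hn; apply: hno; exists x.
    exists 0; first by rewrite /= lexx ler01.
    exact: comb3_same.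
  by move=> [t _ <-]; rewrite comb3_same.
pose L t := comb3 t s0 s1.
set dg1 := t1 s1 - t1 s0; set dg2 := t2 s1 - t2 s0.
set nd := dg1 ^+ 2 + dg2 ^+ 2.
have nd0 : 0 < nd.
  rewrite lt_def addr_ge0 ?sqr_ge0 // andbT; apply/negP => /eqP; rewrite /nd => hnd.
  have e1 : dg1 = 0.
    by apply/eqP; rewrite -sqrf_eq0 eq_le sqr_ge0 andbT; have := sqr_ge0 dg2; lra.
  have e2 : dg2 = 0.
    by apply/eqP; rewrite -sqrf_eq0 eq_le sqr_ge0 andbT; have := sqr_ge0 dg1; lra.
  apply: ne; apply: sig_eq h1 h0.2 _ _.
    by move: e1; rewrite /dg1; lra.
  by move: e2; rewrite /dg2; lra.
have mL : forall t, mink (lift1 eta) (L t) = pm eta.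
  by move=> t; rewrite /L mink_comb h0.2 h1.2; ring.
have t1L : forall t, t1 (L t) = t1 s0 + t * dg1 by move=> t; rewrite /L t1_comb /dg1; ring.
have t2L : forall t, t2 (L t) = t2 s0 + t * dg2 by move=> t; rewrite /L t2_comb /dg2; ring.
have onl : forall s, Sig eta s -> exists t, s = L t.
  move=> s hs.
  set a := t1 s - t1 s0; set b := t2 s - t2 s0.
  have det : dg1 * b - dg2 * a = 0.
    case: (eqVneq (dg1 * b - dg2 * a) 0) => // hD; exfalso.
    exact: (no_tri hm he h0 h1 hs hD).
  exists ((a * dg1 + b * dg2) / nd).
  have k1 : (a * dg1 + b * dg2) / nd * dg1 = a.
    apply: (mulIf (x := nd)); first by rewrite gt_eqF.
    rewrite mulrAC divfK ?gt_eqF //.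
    transitivity (a * nd + dg2 * (dg1 * b - dg2 * a)); first by rewrite /nd; ring.
    by rewrite det mulr0 addr0.
  have k2 : (a * dg1 + b * dg2) / nd * dg2 = b.
    apply: (mulIf (x := nd)); first by rewrite gt_eqF.
    rewrite mulrAC divfK ?gt_eqF //.
    transitivity (b * nd - dg1 * (dg1 * b - dg2 * a)); first by rewrite /nd; ring.
    by rewrite det mulr0 subr0.
  apply: sig_eq hs (mL _) _ _.
    by rewrite t1L k1 /a; ring.
  by rewrite t2L k2 /b; ring.
set K := Kb phi eta.
have hK0 := sig_bound he h0; rewrite -/K in hK0.
have K0 : 0 <= K by apply: le_trans hK0.1; exact: normr_ge0.
set Bd := 2 * K * (`|dg1| + `|dg2|) / nd.
have bnd : forall t, Sig eta (L t) -> `|t| <= Bd.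
  move=> t ht; have := sig_bound he ht; rewrite -/K t1L t2L => [[k1 k2]].
  have u1 : `|t * dg1| <= 2 * K.
    have -> : t * dg1 = (t1 s0 + t * dg1) - t1 s0 by ring.
    by apply: le_trans (ler_normB _ _) _; lra.
  have u2 : `|t * dg2| <= 2 * K.
    have -> : t * dg2 = (t2 s0 + t * dg2) - t2 s0 by ring.
    by apply: le_trans (ler_normB _ _) _; lra.
  have e : `|t| * nd = `|t * dg1| * `|dg1| + `|t * dg2| * `|dg2|.
    rewrite !normrM /nd -[dg1 ^+ 2]real_normK ?num_real // -[dg2 ^+ 2]real_normK ?num_real //.
    ring.
  rewrite /Bd ler_pdivlMr // e.
  have := ler_wpM2r (normr_ge0 dg1) u1; have := ler_wpM2r (normr_ge0 dg2) u2.
  lra.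
pose T := [set t | Sig eta (L t)].
have T0 : T 0 by rewrite /T /= /L comb3_0.
have T1 : T 1 by rewrite /T /= /L comb3_1.
have Tn : T !=set0 by exists 0.
have hub : has_ubound T by exists Bd => t ht; apply: le_trans (ler_norm t) (bnd t ht).
have hlb : has_lbound T.
  by exists (- Bd) => t ht; rewrite lerNl; apply: le_trans (ler_norm (- t)) _; rewrite normrN; apply: bnd.
set b := sup T; set a := inf T.
have b1 : 1 <= b := ub_le_sup hub T1.
have a0 : a <= 0 := ge_inf hlb T0.
have hl : forall xi t, mink (lift1 xi) (L t) =
    mink (lift1 xi) s0 + (mink (lift1 xi) s1 - mink (lift1 xi) s0) * t.
  by move=> xi t; rewrite /L mink_comb; ring.
have Tb : T b.
  split; last exact: mL.
  move=> xi hxi; rewrite hl.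
  set al := mink (lift1 xi) s0; set be := mink (lift1 xi) s1 - al.
  have ha := h0.1 xi hxi; rewrite -/al in ha.
  case: (lerP be 0) => hb.
    have : be * b <= 0 by nra.
    lra.
  have : b <= (pm xi - al) / be.
    rewrite /b; apply: (@ge_sup _ T _ Tn) => t ht; rewrite ler_pdivlMr //.
    by have := ht.1 xi hxi; rewrite hl -/al -/be; nra.
  by rewrite ler_pdivlMr // mulrC; lra.
have Ta : T a.
  split; last exact: mL.
  move=> xi hxi; rewrite hl.
  set al := mink (lift1 xi) s0; set be := mink (lift1 xi) s1 - al.
  have ha := h0.1 xi hxi; rewrite -/al in ha.
  case: (lerP 0 be) => hb.
    have : be * a <= 0 by nra.
    lra.
  have : (pm xi - al) / be <= a.
    rewrite /a; apply: (@lb_le_inf _ T _ Tn) => t ht; rewrite ler_ndivrMr //.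
    by have := ht.1 xi hxi; rewrite hl -/al -/be; nra.
  by rewrite ler_ndivrMr // mulrC; lra.
exists (L a), (L b); apply/seteqP; split => x.
  move=> hx; have [t et] := onl x hx.
  have ht : T t by rewrite /T /= -et.
  have hat : a <= t := ge_inf hlb ht.
  have htb : t <= b := ub_le_sup hub ht.
  case: (lerP b a) => hab.
    exists 0; first by rewrite /= lexx ler01.
    rewrite comb3_0 et /L; congr (comb3 _ s0 s1); apply/eqP; by rewrite eq_le hat (le_trans htb hab).
  have ab : a < b := hab.
  exists ((t - a) / (b - a)).
    rewrite /=; apply/andP; split.
      by apply: divr_ge0; lra.
    by rewrite ler_pdivrMr ?subr_gt0 //; lra.
  rewrite et /L comb3_comb; congr (comb3 _ s0 s1); field; by rewrite subr_eq0 (gt_eqF ab).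
by move=> [u hu <-]; apply: sig_conv.
Qed.


End Seg2.

Section Conv.
Variable R : realType.
Implicit Types (z w x y xi eta : R * R) (c p q : R * R * R).

Definition contE (f : R * R -> R) z := forall e, 0 < e -> exists2 r, 0 < r &
  forall w, S1 w -> `|w.1 - z.1| < r -> `|w.2 - z.2| < r -> `|f w - f z| < e.

Lemma sq_abs_le (a t : R) : 0 <= t -> a ^+ 2 <= t ^+ 2 -> `|a| <= t.
Proof.
move=> t0 h; rewrite -(ler_pXn2r (n := 2)) ?nnegrE //.
by rewrite real_normK ?num_real.
Qed.

Lemma S1_abs z : S1 z -> `|z.1| <= 1 /\ `|z.2| <= 1.
Proof.
rewrite /S1 /= => h; split; first by apply: (@sq_le1 _ z.1 z.2); lra.
by apply: (@sq_le1 _ z.2 z.1); lra.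
Qed.

Lemma D2_abs z : D2 z -> `|z.1| <= 1 /\ `|z.2| <= 1.
Proof.
rewrite /D2 /= => h; split; first by apply: (@sq_le1 _ z.1 z.2); lra.
by apply: (@sq_le1 _ z.2 z.1); lra.
Qed.

Lemma delta_small z xi (rho : R) : S1 z -> D2 xi -> `|xi.1 - z.1| < rho -> `|xi.2 - z.2| < rho ->
  1 - nn xi <= 4 * rho.
Proof.
move=> hz hxi h1 h2.
have [a1 a2] := S1_abs hz; have [b1 b2] := D2_abs hxi.
have e : 1 - nn xi = (z.1 + xi.1) * (z.1 - xi.1) + (z.2 + xi.2) * (z.2 - xi.2).
  by move: hz; rewrite /S1 /nn /= => <-; ring.
rewrite -normrN opprB in h1; rewrite -normrN opprB in h2.
have := lin_small (z.1 + xi.1) (z.2 + xi.2) h1 h2; rewrite -e.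
have c1 : `|z.1 + xi.1| <= 2 by apply: le_trans (ler_normD _ _) _; lra.
have c2 : `|z.2 + xi.2| <= 2 by apply: le_trans (ler_normD _ _) _; lra.
have r0 : 0 <= rho by apply: le_trans (ltW h1); exact: normr_ge0.
have := ler_norm (1 - nn xi).
have : (`|z.1 + xi.1| + `|z.2 + xi.2|) * rho <= 4 * rho by apply: ler_wpM2r => //; lra.
lra.
Qed.

Variables (phi : R * R -> R) (m : R).
Hypothesis hm : forall z, S1 z -> m <= phi z.
Local Notation pm := (phi_minus phi).

Lemma pm_upper_cont z : S1 z -> contE phi z -> forall e, 0 < e ->
  exists2 rho, 0 < rho & forall xi, D2 xi -> `|xi.1 - z.1| < rho -> `|xi.2 - z.2| < rho ->
    pm xi < phi z + e.
Proof.
move=> hz hc e e0.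
have [r r0 hr] := hc e e0.
set h := r / 2.
have h0 : 0 < h by rewrite /h divr_gt0.
set rho := Num.min h (h ^+ 2 / 4).
have rho0 : 0 < rho by rewrite /rho lt_min h0 divr_gt0 // exprn_gt0.
have rh : rho <= h by rewrite /rho ge_min lexx.
have rh2 : rho <= h ^+ 2 / 4 by rewrite /rho ge_min lexx orbT.
exists rho => // xi hxi h1 h2.
have [w [w' [hw [hw' [e1 [e2 ed]]]]]] := midchord hxi.
have dl := delta_small hz hxi h1 h2.
have q1 : `|w.1 - xi.1| <= h.
  apply: sq_abs_le; first exact: ltW.
  have := sqr_ge0 (w.2 - xi.2); lra.
have q2 : `|w.2 - xi.2| <= h.
  apply: sq_abs_le; first exact: ltW.
  have := sqr_ge0 (w.1 - xi.1); lra.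
have hrh : r = h + h by rewrite /h; field.
have c1 : `|w.1 - z.1| < r.
  have -> : w.1 - z.1 = (w.1 - xi.1) + (xi.1 - z.1) by ring.
  by apply: le_lt_trans (ler_normD _ _) _; lra.
have c2 : `|w.2 - z.2| < r.
  have -> : w.2 - z.2 = (w.2 - xi.2) + (xi.2 - z.2) by ring.
  by apply: le_lt_trans (ler_normD _ _) _; lra.
have c1' : `|w'.1 - z.1| < r.
  have -> : w'.1 - z.1 = - (w.1 - xi.1) + (xi.1 - z.1) by rewrite e1; field.
  by apply: le_lt_trans (ler_normD _ _) _; rewrite normrN; lra.
have c2' : `|w'.2 - z.2| < r.
  have -> : w'.2 - z.2 = - (w.2 - xi.2) + (xi.2 - z.2) by rewrite e2; field.
  by apply: le_lt_trans (ler_normD _ _) _; rewrite normrN; lra.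
have := hr w hw c1 c2; have := hr w' hw' c1' c2'.
have := pm_mid hm hxi hw hw' e1 e2.
have := ler_norm (phi w - phi z); have := ler_norm (phi w' - phi z).
lra.
Qed.

Lemma pm_upper_rad z y : S1 z -> D2 y -> forall e, 0 < e ->
  exists2 s0, 0 < s0 & forall s, 0 < s -> s < s0 -> pm (ps s z y) < phi z + e.
Proof.
move=> hz hy e e0.
set Dd := pm y - phi z.
set s0 := Num.min 1 (e / (`|Dd| + 1)).
have n0 : 0 < `|Dd| + 1 by have := normr_ge0 Dd; lra.
have s00 : 0 < s0 by rewrite /s0 lt_min ltr01 divr_gt0.
exists s0 => // s sp ss.
have s1 : s < 1 by apply: lt_le_trans ss _; rewrite /s0 ge_min lexx.
have s2 : s < e / (`|Dd| + 1) by apply: lt_le_trans ss _; rewrite /s0 ge_min lexx orbT.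
have := pm_conv hm (s := s) hz hy; rewrite -/Dd.
have hs : 0 <= s <= 1 by apply/andP; split; lra.
move=> /(_ hs) hc.
have : s * (`|Dd| + 1) < e by rewrite -ltr_pdivlMr.
have := ler_norm Dd.
have : s * Dd <= s * `|Dd| by apply: ler_wpM2l; [lra | exact: ler_norm].
have ee : (1 - s) * phi z + s * pm y = phi z + s * Dd by rewrite /Dd; ring.
rewrite ee in hc.
nra.
Qed.

Lemma ps_close s z y : S1 z -> D2 y -> 0 <= s ->
  `|(ps s z y).1 - z.1| <= 2 * s /\ `|(ps s z y).2 - z.2| <= 2 * s.
Proof.
move=> hz hy s0; have [a1 a2] := S1_abs hz; have [b1 b2] := D2_abs hy.
have -> : (ps s z y).1 - z.1 = s * (y.1 - z.1) by rewrite /ps /=; ring.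
have -> : (ps s z y).2 - z.2 = s * (y.2 - z.2) by rewrite /ps /=; ring.
rewrite !normrM (ger0_norm s0); split; rewrite mulrC; apply: ler_wpM2r => //.
  by apply: le_trans (ler_normB _ _) _; lra.
by apply: le_trans (ler_normB _ _) _; lra.
Qed.

End Conv.

Section Final.
Variable R : realType.
Implicit Types (z w x y xi eta : R * R) (c p q : R * R * R).

Definition Fv eta (s : R * R * R) : R * R :=
  (- eta.2 * mink (lift1 eta) s - (1 - nn eta) * t2 s,
   eta.1 * mink (lift1 eta) s + (1 - nn eta) * t1 s).

Lemma E_form eta (s : R * R * R) : dPi (lift1 eta) (mcross (lift1 eta) s) = Fv eta s.
Proof.
rewrite /dPi /mcross /lift1 /Fv /mink /nn /t0 /t1 /t2 /=.
rewrite !divr1 expr1n !divr1; congr (_, _); ring.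
Qed.

Lemma F_err1 (u u0 p p0 g : R) :
  `|(- u * p - g) - (- u0 * p0)| <= `|u - u0| * `|p| + `|u0| * `|p - p0| + `|g|.
Proof.
have -> : (- u * p - g) - (- u0 * p0) = - ((u - u0) * p + u0 * (p - p0) + g) by ring.
rewrite normrN; apply: le_trans (ler_normD _ _) _; rewrite -!normrM.
by apply: lerD => //; apply: ler_normD.
Qed.

Lemma F_err2 (u u0 p p0 g : R) :
  `|(u * p + g) - (u0 * p0)| <= `|u - u0| * `|p| + `|u0| * `|p - p0| + `|g|.
Proof.
have -> : (u * p + g) - (u0 * p0) = (u - u0) * p + u0 * (p - p0) + g by ring.
apply: le_trans (ler_normD _ _) _; rewrite -!normrM.
by apply: lerD => //; apply: ler_normD.
Qed.

End Final.

Section Final2.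
Variable R : realType.
Implicit Types (z w x y xi eta : R * R) (c p q : R * R * R).
Variables (phi : R * R -> R) (m : R).
Hypothesis hm : forall z, S1 z -> m <= phi z.
Local Notation pm := (phi_minus phi).
Local Notation Sig := (Sigma_minus phi).

Lemma slope_small eta s (h c e1 : R) : Sig eta s -> 0 < h ->
  D2 (eta.1 + h, eta.2) -> D2 (eta.1 - h, eta.2) ->
  D2 (eta.1, eta.2 + h) -> D2 (eta.1, eta.2 - h) ->
  `|pm eta - c| < e1 ->
  `|pm (eta.1 + h, eta.2) - c| < e1 -> `|pm (eta.1 - h, eta.2) - c| < e1 ->
  `|pm (eta.1, eta.2 + h) - c| < e1 -> `|pm (eta.1, eta.2 - h) - c| < e1 ->
  h * `|t1 s| < 2 * e1 /\ h * `|t2 s| < 2 * e1.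
Proof.
move=> hs h0 d1 d2 d3 d4 b0 b1 b2 b3 b4.
have q1 := sig_slope hs d1; have q2 := sig_slope hs d2.
have q3 := sig_slope hs d3; have q4 := sig_slope hs d4.
move: q1 q2 q3 q4 => /=.
have -> : eta.1 + h - eta.1 = h by ring.
have -> : eta.1 - h - eta.1 = - h by ring.
have -> : eta.2 + h - eta.2 = h by ring.
have -> : eta.2 - h - eta.2 = - h by ring.
rewrite !subrr !mulr0 !addr0 !add0r !mulrN => q1 q2 q3 q4.
move: b0 b1 b2 b3 b4; rewrite !ltr_norml => /andP[? ?] /andP[? ?] /andP[? ?] /andP[? ?] /andP[? ?].
split.
  case: (ler0P (t1 s)) => ht; first by rewrite mulrN -mulNr mulrC; lra.
  by rewrite mulrC; lra.
case: (ler0P (t2 s)) => ht; first by rewrite mulrN -mulNr mulrC; lra.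
by rewrite mulrC; lra.
Qed.

Lemma conv_cont z : S1 z -> lscE phi z -> contE phi z -> forall e, 0 < e ->
  exists2 rho, 0 < rho & forall xi, D2 xi -> `|xi.1 - z.1| < rho -> `|xi.2 - z.2| < rho ->
    `|pm xi - phi z| < e.
Proof.
move=> hz hl hc e e0.
have [ra ra0 hra] := pm_lower hm hz hl e0.
have [rb rb0 hrb] := pm_upper_cont hm hz hc e0.
exists (Num.min ra rb); first by rewrite lt_min ra0 rb0.
move=> xi hxi h1 h2; move: h1 h2; rewrite !lt_min => /andP[h1 h1'] /andP[h2 h2'].
have := hra xi hxi h1 h2; have := hrb xi hxi h1' h2'.
by rewrite ltr_norml => ??; apply/andP; split; lra.
Qed.

Lemma gen_cont z : S1 z -> lscE phi z -> contE phi z -> forall e, 0 < e ->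
  exists2 rho, 0 < rho & forall xi, D2 xi -> `|xi.1 - z.1| < rho -> `|xi.2 - z.2| < rho ->
    forall s, Sig xi s ->
    `|(Fv xi s).1 - (Xf phi z).1| < e /\ `|(Fv xi s).2 - (Xf phi z).2| < e.
Proof.
move=> hz hl hc e e0.
set A := `|phi z| + 1.
have A0 : 0 < A by rewrite /A; have := normr_ge0 (phi z); lra.
set e1 := Num.min 1 (e / 20).
have e10 : 0 < e1 by rewrite /e1 lt_min ltr01 divr_gt0.
have e11 : e1 <= 1 by rewrite /e1 ge_min lexx.
have e12 : e1 <= e / 20 by rewrite /e1 ge_min lexx orbT.
have [r1 r10 hr1] := conv_cont hz hl hc e10.
set rho := Num.min (r1 / 2) (e / (4 * A)).
have rho0 : 0 < rho by rewrite /rho lt_min divr_gt0 // divr_gt0 // mulr_gt0.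
have rh1 : rho <= r1 / 2 by rewrite /rho ge_min lexx.
have rh2 : rho <= e / (4 * A) by rewrite /rho ge_min lexx orbT.
have rhA : rho * A <= e / 4.
  have -> : e / 4 = e / (4 * A) * A by field; rewrite gt_eqF.
  by apply: ler_wpM2r => //; apply: ltW.
exists rho => // xi hxi h1 h2 s hs.
have r1h : rho < r1 by lra.
have hp := hr1 xi hxi (lt_trans h1 r1h) (lt_trans h2 r1h).
set h := rr xi.
have h0 : 0 < h := rr_gt0 hxi.
have dl := delta_small hz hxi h1 h2.
have hrho : h <= rho by rewrite /h /rr; lra.
have n1 : `|(1 : R)| <= 1 by rewrite normr1.
have n2 : `|(-1 : R)| <= 1 by rewrite normrN normr1.
have d1 : D2 (xi.1 + h, xi.2) by have := P1_D2 hxi n1; rewrite /P1 mulr1.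
have d2 : D2 (xi.1 - h, xi.2) by have := P1_D2 hxi n2; rewrite /P1 mulrN1.
have d3 : D2 (xi.1, xi.2 + h) by have := P2_D2 hxi n1; rewrite /P2 mulr1.
have d4 : D2 (xi.1, xi.2 - h) by have := P2_D2 hxi n2; rewrite /P2 mulrN1.
have cl : forall u u0 : R, `|u - u0| < rho -> `|u + h - u0| < r1 /\ `|u - h - u0| < r1.
  move=> u u0 hu; split.
    have -> : u + h - u0 = (u - u0) + h by ring.
    by apply: le_lt_trans (ler_normD _ _) _; rewrite (gtr0_norm h0); lra.
  have -> : u - h - u0 = (u - u0) + (- h) by ring.
  by apply: le_lt_trans (ler_normD _ _) _; rewrite normrN (gtr0_norm h0); lra.
have [c11 c12] := cl _ _ h1; have [c21 c22] := cl _ _ h2.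
have p1 := hr1 _ d1 c11 (lt_trans h2 r1h).
have p2 := hr1 _ d2 c12 (lt_trans h2 r1h).
have p3 := hr1 _ d3 (lt_trans h1 r1h) c21.
have p4 := hr1 _ d4 (lt_trans h1 r1h) c22.
have [g1 g2] := slope_small hs h0 d1 d2 d3 d4 hp p1 p2 p3 p4.
have hd : 1 - nn xi = 4 * h by rewrite /h /rr; field.
have G1 : `|(1 - nn xi) * t1 s| < 8 * e1 by rewrite normrM hd (ger0_norm (ltW _)) ?mulr_gt0 //; lra.
have G2 : `|(1 - nn xi) * t2 s| < 8 * e1 by rewrite normrM hd (ger0_norm (ltW _)) ?mulr_gt0 //; lra.
have [z1 z2] := S1_abs hz.
have pmA : `|pm xi| <= A.
  have -> : pm xi = (pm xi - phi z) + phi z by ring.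
  by apply: le_trans (ler_normD _ _) _; rewrite /A; lra.
have u1 : `|xi.1 - z.1| * `|pm xi| <= e / 4.
  apply: le_trans rhA; apply: ler_pM => //; exact: ltW.
have u2 : `|xi.2 - z.2| * `|pm xi| <= e / 4.
  apply: le_trans rhA; apply: ler_pM => //; exact: ltW.
have v1 : `|z.1| * `|pm xi - phi z| <= e1.
  by have := normr_ge0 (pm xi - phi z); have := normr_ge0 z.1; nra.
have v2 : `|z.2| * `|pm xi - phi z| <= e1.
  by have := normr_ge0 (pm xi - phi z); have := normr_ge0 z.2; nra.
rewrite /Fv /Xf /= hs.2; split.
  by apply: le_lt_trans (F_err1 _ _ _ _ _) _; lra.
by apply: le_lt_trans (F_err2 _ _ _ _ _) _; lra.
Qed.

End Final2.

Section Final3.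
Variable R : realType.
Implicit Types (z w x y xi eta : R * R) (c p q : R * R * R).
Variables (phi : R * R -> R) (m : R).
Hypothesis hm : forall z, S1 z -> m <= phi z.
Local Notation pm := (phi_minus phi).
Local Notation Sig := (Sigma_minus phi).

Lemma conv_rad z y : S1 z -> lscE phi z -> D2 y -> forall e, 0 < e ->
  exists2 s0, 0 < s0 & forall s, 0 < s -> s < s0 -> `|pm (ps s z y) - phi z| < e.
Proof.
move=> hz hl hy e e0.
have [ra ra0 hra] := pm_lower hm hz hl e0.
have [sb sb0 hsb] := pm_upper_rad hm hz hy e0.
exists (Num.min (Num.min (ra / 2) sb) 1).
  by rewrite !lt_min ltr01 sb0 divr_gt0.
move=> s sp; rewrite !lt_min => /andP[/andP[s1 s2] s3].
have hd : D2 (ps s z y) by apply: D2_ps => //; apply/andP; split; lra.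
have [c1 c2] := ps_close hz hy (ltW sp).
have q1 : `|(ps s z y).1 - z.1| < ra by lra.
have q2 : `|(ps s z y).2 - z.2| < ra by lra.
have := hra _ hd q1 q2; have := hsb s sp s2.
by rewrite ltr_norml => ??; apply/andP; split; lra.
Qed.

Lemma ps_shift1 s z x (k : R) : ps s z (x.1 + k, x.2) = ((ps s z x).1 + s * k, (ps s z x).2).
Proof. by rewrite /ps /=; congr (_, _); ring. Qed.
Lemma ps_shift2 s z x (k : R) : ps s z (x.1, x.2 + k) = ((ps s z x).1, (ps s z x).2 + s * k).
Proof. by rewrite /ps /=; congr (_, _); ring. Qed.

Lemma delta_ps s z x : S1 z -> D2 x -> 0 <= s <= 1 -> 1 - nn (ps s z x) <= 5 * s.
Proof.
move=> hz hx /andP[s0 s1]; rewrite nn_ps.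
move: (hz) (hx); rewrite /S1 /D2 /nn /= => hz' hx'; rewrite hz'.
have hq : (z.1 - x.1) ^+ 2 + (z.2 - x.2) ^+ 2 <= 4.
  have : (z.1 - x.1) ^+ 2 + (z.2 - x.2) ^+ 2 + ((z.1 + x.1) ^+ 2 + (z.2 + x.2) ^+ 2) =
     2 * (z.1 ^+ 2 + z.2 ^+ 2) + 2 * (x.1 ^+ 2 + x.2 ^+ 2) by ring.
  by have := sqr_ge0 (z.1 + x.1); have := sqr_ge0 (z.2 + x.2); lra.
have nx : 0 <= x.1 ^+ 2 + x.2 ^+ 2 by apply: addr_ge0; exact: sqr_ge0.
have : s * (1 - s) * ((z.1 - x.1) ^+ 2 + (z.2 - x.2) ^+ 2) <= s * 4.
  have : s * (1 - s) <= s by nra.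
  have : 0 <= s * (1 - s) by nra.
  have := addr_ge0 (sqr_ge0 (z.1 - x.1)) (sqr_ge0 (z.2 - x.2)).
  nra.
have : 0 <= s * (x.1 ^+ 2 + x.2 ^+ 2) by apply: mulr_ge0.
lra.
Qed.

Lemma gen_rad z x : S1 z -> lscE phi z -> D2 x -> forall e, 0 < e ->
  exists2 s0, 0 < s0 & forall s, 0 < s -> s < s0 -> forall sg, Sig (ps s z x) sg ->
    `|(Fv (ps s z x) sg).1 - (Xf phi z).1| < e /\ `|(Fv (ps s z x) sg).2 - (Xf phi z).2| < e.
Proof.
move=> hz hl hx e e0.
set k := rr x.
have k0 : 0 < k := rr_gt0 hx.
have k1 : k <= 1 by rewrite /k /rr /nn; have := sqr_ge0 x.1; have := sqr_ge0 x.2; lra.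
have n1 : `|(1 : R)| <= 1 by rewrite normr1.
have n2 : `|(-1 : R)| <= 1 by rewrite normrN normr1.
have d1 : D2 (x.1 + k, x.2) by have := P1_D2 hx n1; rewrite /P1 mulr1.
have d2 : D2 (x.1 + - k, x.2) by have := P1_D2 hx n2; rewrite /P1 mulrN1.
have d3 : D2 (x.1, x.2 + k) by have := P2_D2 hx n1; rewrite /P2 mulr1.
have d4 : D2 (x.1, x.2 + - k) by have := P2_D2 hx n2; rewrite /P2 mulrN1.
set A := `|phi z| + 1.
have A0 : 0 < A by rewrite /A; have := normr_ge0 (phi z); lra.
set e1 := Num.min 1 (e * k / 40).
have e10 : 0 < e1 by rewrite /e1 lt_min ltr01 divr_gt0 // mulr_gt0.
have e11 : e1 <= 1 by rewrite /e1 ge_min lexx.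
have e12 : e1 <= e * k / 40 by rewrite /e1 ge_min lexx orbT.
have [a0 a00 ha0] := conv_rad hz hl hx e10.
have [a1 a10 ha1] := conv_rad hz hl d1 e10.
have [a2 a20 ha2] := conv_rad hz hl d2 e10.
have [a3 a30 ha3] := conv_rad hz hl d3 e10.
have [a4 a40 ha4] := conv_rad hz hl d4 e10.
set s0 := Num.min (Num.min (Num.min a0 a1) (Num.min a2 a3)) (Num.min a4 (Num.min 1 (e / (8 * A)))).
have s00 : 0 < s0.
  by rewrite /s0 !lt_min a00 a10 a20 a30 a40 ltr01 divr_gt0 // mulr_gt0.
exists s0 => // s sp ss.
move: (ss); rewrite /s0 !lt_min => /andP[/andP[/andP[b0 b1] /andP[b2 b3]] /andP[b4 /andP[b5 b6]]].
move=> sg hsg.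
set eta := ps s z x.
have he : D2 eta by apply: D2_ps => //; apply/andP; split; lra.
have h0 : 0 < s * k by apply: mulr_gt0.
have q1 : D2 (eta.1 + s * k, eta.2) by rewrite -ps_shift1; apply: D2_ps => //; apply/andP; split; lra.
have q2 : D2 (eta.1 - s * k, eta.2).
  by rewrite -mulrN -ps_shift1; apply: D2_ps => //; apply/andP; split; lra.
have q3 : D2 (eta.1, eta.2 + s * k) by rewrite -ps_shift2; apply: D2_ps => //; apply/andP; split; lra.
have q4 : D2 (eta.1, eta.2 - s * k).
  by rewrite -mulrN -ps_shift2; apply: D2_ps => //; apply/andP; split; lra.
have p0 := ha0 s sp b0.
have p1 : `|pm (eta.1 + s * k, eta.2) - phi z| < e1 by rewrite -ps_shift1; apply: ha1.
have p2 : `|pm (eta.1 - s * k, eta.2) - phi z| < e1 by rewrite -mulrN -ps_shift1; apply: ha2.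
have p3 : `|pm (eta.1, eta.2 + s * k) - phi z| < e1 by rewrite -ps_shift2; apply: ha3.
have p4 : `|pm (eta.1, eta.2 - s * k) - phi z| < e1 by rewrite -mulrN -ps_shift2; apply: ha4.
have [g1 g2] := slope_small hsg h0 q1 q2 q3 q4 p0 p1 p2 p3 p4.
have dl : 1 - nn eta <= 5 * s by apply: delta_ps => //; apply/andP; split; lra.
have dl0 : 0 <= 1 - nn eta by move: he; rewrite /D2 /nn /=; lra.
have G : forall t : R, s * k * `|t| < 2 * e1 -> `|(1 - nn eta) * t| < e / 4.
  move=> t ht; rewrite normrM (ger0_norm dl0).
  have : (1 - nn eta) * `|t| * k <= 5 * (s * k * `|t|).
    have : (1 - nn eta) * `|t| <= 5 * s * `|t| by apply: ler_wpM2r.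
    by move=> h; apply: le_trans (ler_wpM2r (ltW k0) h) _; rewrite le_eqVlt; apply/orP; left; apply/eqP; ring.
  move=> h; have : (1 - nn eta) * `|t| * k < e / 4 * k by lra.
  by rewrite ltr_pM2r.
have G1 := G _ g1; have G2 := G _ g2.
have [z1 z2] := S1_abs hz.
have [c1 c2] := ps_close hz hx (ltW sp); rewrite -/eta in c1 c2.
have pmA : `|pm eta| <= A.
  have -> : pm eta = (pm eta - phi z) + phi z by ring.
  by apply: le_trans (ler_normD _ _) _; rewrite /A; lra.
have sA : 2 * s * A <= e / 4.
  have : s * (8 * A) < e by rewrite -ltr_pdivlMr // mulr_gt0.
  lra.
have u1 : `|eta.1 - z.1| * `|pm eta| <= e / 4.
  apply: (le_trans _ sA); apply: ler_pM => //.
have u2 : `|eta.2 - z.2| * `|pm eta| <= e / 4.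
  apply: (le_trans _ sA); apply: ler_pM => //.
have v1 : `|z.1| * `|pm eta - phi z| <= e1.
  by have := normr_ge0 (pm eta - phi z); have := normr_ge0 z.1; nra.
have v2 : `|z.2| * `|pm eta - phi z| <= e1.
  by have := normr_ge0 (pm eta - phi z); have := normr_ge0 z.2; nra.
have e1e : e1 <= e / 4 by nra.
rewrite /Fv /Xf /= hsg.2; split.
  by apply: le_lt_trans (F_err1 _ _ _ _ _) _; lra.
by apply: le_lt_trans (F_err2 _ _ _ _ _) _; lra.
Qed.

End Final3.

Section Conv2.
Variable R : realType.
Implicit Types (z w x y xi eta : R * R) (c p q : R * R * R).

Lemma cvg_from_eps (u : nat -> R * R) (f : R * R -> R * R) z (L : R * R) :
  (forall e, 0 < e -> exists2 rho, 0 < rho & forall xi, D2 xi ->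
     `|xi.1 - z.1| < rho -> `|xi.2 - z.2| < rho ->
     `|(f xi).1 - L.1| < e /\ `|(f xi).2 - L.2| < e) ->
  (forall n, D2 (u n)) -> u @ \oo --> z -> (f \o u) @ \oo --> L.
Proof.
move=> H hD hu U /nb [e e0 hU].
have [rho r0 hr] := H e e0.
have hb := hu _ (nb2 z r0).
move: hb; rewrite !nbhs_simpl /=; apply: filterS => n [h1 h2].
by have [a b] := hr _ (hD n) h1 h2; apply: hU.
Qed.

Lemma rad_from_eps (g : R -> R * R) (L : R * R) :
  (forall e, 0 < e -> exists2 s0, 0 < s0 & forall s, 0 < s -> s < s0 ->
     `|(g s).1 - L.1| < e /\ `|(g s).2 - L.2| < e) ->
  g s @[s --> 0^'+] --> L.
Proof.
move=> H U /nb [e e0 hU].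
have [s0 s00 hs] := H e e0.
apply/nbhs_ballP; exists s0 => // s hb sp.
rewrite /ball /= sub0r normrN gtr0_norm // in hb.
by have [a b] := hs s sp hb; apply: hU.
Qed.

End Conv2.

Section Conv3.
Variable R : realType.
Implicit Types (z w x y xi eta : R * R) (c p q : R * R * R).

Lemma cont_contE (phi : R * R -> R) : {within @S1 R, continuous (Xf phi)} ->
  forall z, S1 z -> contE phi z.
Proof.
move=> H z hz e e0.
have hc := (subspace_continuousP _ _).1 H z hz.
set e4 := e / 4.
have e40 : 0 < e4 by rewrite /e4 divr_gt0.
have hb := hc _ (nb2 (Xf phi z) e40).
move: hb; rewrite nbhs_simpl /= => hb.
have [r r0 hr] := nb hb.
set M := `|(Xf phi z).1| + `|(Xf phi z).2| + 1.
have M0 : 0 < M by rewrite /M; have := normr_ge0 (Xf phi z).1; have := normr_ge0 (Xf phi z).2; lra.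
exists (Num.min r (e4 / M)); first by rewrite lt_min r0 divr_gt0.
move=> w hw; rewrite !lt_min => /andP[h1 h1'] /andP[h2 h2'].
have [b1 b2] := hr w h1 h2 hw.
move: b1 b2; rewrite /Xf /= => b1 b2.
have ephi : forall v, S1 v -> phi v = v.1 * (v.1 * phi v) - v.2 * (- v.2 * phi v).
  by move=> v; rewrite /S1 /= => hv; rewrite -[LHS]mul1r -hv; ring.
rewrite (ephi w hw) (ephi z hz).
set a1 := - w.2 * phi w; set a2 := w.1 * phi w.
set c1 := - z.2 * phi z; set c2 := z.1 * phi z.
have -> : w.1 * a2 - w.2 * a1 - (z.1 * c2 - z.2 * c1) =
   w.1 * (a2 - c2) + (w.1 - z.1) * c2 - (w.2 * (a1 - c1) + (w.2 - z.2) * c1) by ring.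
have [w1 w2] := S1_abs hw.
have k1 : `|w.1 * (a2 - c2)| <= e4 by rewrite normrM; have := normr_ge0 (a2 - c2); have := normr_ge0 w.1; nra.
have k2 : `|w.2 * (a1 - c1)| <= e4 by rewrite normrM; have := normr_ge0 (a1 - c1); have := normr_ge0 w.2; nra.
have hM1 : (e4 / M) * M = e4 by field; lra.
have k3 : `|(w.1 - z.1) * c2| <= e4 / M * `|c2|.
  by rewrite normrM; apply: ler_wpM2r => //; apply: ltW.
have k4 : `|(w.2 - z.2) * c1| <= e4 / M * `|c1|.
  by rewrite normrM; apply: ler_wpM2r => //; apply: ltW.
have k5 : e4 / M * `|c1| + e4 / M * `|c2| <= e4.
  rewrite -mulrDr -[X in _ <= X]hM1; apply: ler_wpM2l.
    by apply: ltW; rewrite divr_gt0.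
  by rewrite /M /c1 /c2; lra.
apply: le_lt_trans (ler_normB _ _) _.
have := ler_normD (w.1 * (a2 - c2)) ((w.1 - z.1) * c2).
have := ler_normD (w.2 * (a1 - c1)) ((w.2 - z.2) * c1).
have : 3 * e4 < e by rewrite /e4; lra.
lra.
Qed.

Lemma contE_lscE (phi : R * R -> R) z : contE phi z -> lscE phi z.
Proof.
move=> hc a ha; have [r r0 hr] := hc (phi z - a) ltac:(lra).
exists r => // w hw h1 h2; have := hr w hw h1 h2.
have := ler_norm (- (phi w - phi z)); rewrite normrN; lra.
Qed.

Lemma contE_opp (phi : R * R -> R) z : contE phi z -> contE (fun w => - phi w) z.
Proof.
move=> hc e e0; have [r r0 hr] := hc e e0; exists r => // w hw h1 h2.
by rewrite -opprD normrN; apply: hr.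
Qed.

Lemma lsc_lscE (phi : R * R -> R) : lsc_on (@S1 R) phi -> forall z, S1 z -> lscE phi z.
Proof.
move=> hl z hz a ha; have := hl z hz a ha.
rewrite /prop_near1 /within /= => hn.
have [r r0 hr] := nb hn.
by exists r => // w hw h1 h2; apply: hr.
Qed.

Lemma usc_lscE (phi : R * R -> R) : usc_on (@S1 R) phi ->
  forall z, S1 z -> lscE (fun w => - phi w) z.
Proof.
move=> hl z hz a ha; have := hl z hz (- a) ltac:(by rewrite ltrNr).
rewrite /prop_near1 /within /= => hn.
have [r r0 hr] := nb hn.
by exists r => // w hw h1 h2; rewrite ltrNr; apply: hr.
Qed.

End Conv3.

Section Plus.
Variable R : realType.
Implicit Types (z w x y xi eta : R * R) (c p q : R * R * R).

Definition neg3 (s : R * R * R) : R * R * R := ((- t0 s, - t1 s), - t2 s).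

Lemma neg3K s : neg3 (neg3 s) = s.
Proof. by apply: triple_eq; rewrite /neg3 /t0 /t1 /t2 /= opprK. Qed.

Lemma aff_neg3 c xi : affine_ev (neg3 c) xi = - affine_ev c xi.
Proof. rewrite /affine_ev /neg3 /t0 /t1 /t2 /=; ring. Qed.

Lemma mink_neg3 s xi : mink (lift1 xi) (neg3 s) = - mink (lift1 xi) s.
Proof. rewrite !mink_lift /neg3 /t0 /t1 /t2 /=; ring. Qed.

Lemma comb3_neg3 (t : R) p q : comb3 t (neg3 p) (neg3 q) = neg3 (comb3 t p q).
Proof. by apply: triple_eq; rewrite ?t0_comb ?t1_comb ?t2_comb /neg3 /t0 /t1 /t2 /=; ring. Qed.

Variable phi : R * R -> R.
Local Notation psi := (fun w => - phi w).

Lemma phi_plus_eq eta : phi_plus phi eta = - phi_minus psi eta.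
Proof.
rewrite /phi_plus /phi_minus /inf; congr (- sup _); apply/seteqP; split => y.
  move=> [y' [c [hc ->]] <-]; exists (neg3 c); split; last by rewrite aff_neg3.
  by move=> z hz; rewrite aff_neg3 lerN2; apply: hc.
move=> [c [hc ->]]; exists (affine_ev (neg3 c) eta); last by rewrite aff_neg3 opprK.
exists (neg3 c); split => // z hz; rewrite aff_neg3 lerNr; exact: hc.
Qed.

Lemma sig_plus_iff eta s : Sigma_plus phi eta s <-> Sigma_minus psi eta (neg3 s).
Proof.
split.
  move=> [h1 h2]; split.
    by move=> xi hxi; rewrite mink_neg3 -[X in _ <= X]opprK -phi_plus_eq lerN2; apply: h1.
  by rewrite mink_neg3 h2 phi_plus_eq opprK.
move=> [h1 h2]; split.
  by move=> xi hxi; rewrite phi_plus_eq -lerN2 opprK -mink_neg3; apply: h1.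
by rewrite phi_plus_eq -h2 mink_neg3 opprK.
Qed.

Lemma sig_plus_seg eta : (exists p q, Sigma_minus psi eta = segment3 p q) ->
  exists p q, Sigma_plus phi eta = segment3 p q.
Proof.
move=> [p [q hpq]]; exists (neg3 p), (neg3 q); apply/seteqP; split => x.
  move=> /sig_plus_iff; rewrite hpq => [[t ht htx]]; exists t => //.
  by rewrite comb3_neg3 htx neg3K.
move=> [t ht <-]; apply/sig_plus_iff; rewrite hpq comb3_neg3 neg3K; by exists t.
Qed.

Lemma Fv_neg3 eta s : Fv eta (neg3 s) = (- (Fv eta s).1, - (Fv eta s).2).
Proof. rewrite /Fv mink_neg3 /neg3 /t1 /t2 /=; congr (_, _); ring. Qed.

Lemma Xf_neg z : Xf psi z = (- (Xf phi z).1, - (Xf phi z).2).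
Proof. rewrite /Xf /=; congr (_, _); ring. Qed.

End Plus.

Lemma neg_abs (R : realType) (a b : R) : `|- a - - b| = `|a - b|.
Proof. by rewrite -opprD normrN. Qed.

Lemma Eminus_form (R : realType) (phi : R * R -> R) (m : R) (hm : forall z, S1 z -> m <= phi z) eta :
  D2 eta -> exists s, Sigma_minus phi eta s /\ E_minus phi eta = Fv eta s.
Proof.
move=> he; exists (midpt (Sigma_minus phi eta)); split; last by rewrite /E_minus E_form.
by apply: mid_in; apply: (sig_segment hm he).
Qed.

Lemma Eplus_form (R : realType) (phi : R * R -> R) (m : R)
  (hm : forall z, S1 z -> m <= - phi z) eta :
  D2 eta -> exists s, Sigma_minus (fun w => - phi w) eta (neg3 s) /\ E_plus phi eta = Fv eta s.
Proof.
move=> he; exists (midpt (Sigma_plus phi eta)); split; last by rewrite /E_plus E_form.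
apply/sig_plus_iff; apply: mid_in; apply: sig_plus_seg.
exact: (sig_segment (phi := fun w => - phi w) hm he).
Qed.

Unset Implicit Arguments.

Theorem proposition1p5 (R : realType) (phi : R * R -> R) :
  ({within @S1 R, continuous (Xf phi)} ->
     extends_continuously (E_plus phi) (Xf phi) /\
     extends_continuously (E_minus phi) (Xf phi)) /\
  (lsc_on (@S1 R) phi -> extends_radially (E_minus phi) (Xf phi)) /\
  (usc_on (@S1 R) phi -> extends_radially (E_plus phi) (Xf phi)).
Proof.
split; [|split].
- move=> H; have hc := cont_contE H.
  have hl : forall z, S1 z -> lscE phi z by move=> z hz; apply: contE_lscE; apply: hc.
  have hc' : forall z, S1 z -> contE (fun w => - phi w) z by move=> z hz; apply: contE_opp; apply: hc.
  have hl' : forall z, S1 z -> lscE (fun w => - phi w) z by move=> z hz; apply: contE_lscE; apply: hc'.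
  have [m hm] := lsc_bounded hl.
  have [m' hm'] := lsc_bounded hl'.
  split.
  + move=> u z hD hz hu; apply: cvg_from_eps hD hu => e e0.
    have [rho r0 hr] := gen_cont hm' hz (hl' z hz) (hc' z hz) e0.
    exists rho => // xi hxi h1 h2.
    have [s [hs ->]] := Eplus_form hm' hxi.
    have := hr xi hxi h1 h2 _ hs; rewrite Fv_neg3 Xf_neg /= !neg_abs.
    by [].
  + move=> u z hD hz hu; apply: cvg_from_eps hD hu => e e0.
    have [rho r0 hr] := gen_cont hm hz (hl z hz) (hc z hz) e0.
    exists rho => // xi hxi h1 h2.
    have [s [hs ->]] := Eminus_form hm hxi.
    exact: hr.
- move=> H; have hl := lsc_lscE H.
  have [m hm] := lsc_bounded hl.
  move=> z x hz hx; apply: rad_from_eps => e e0.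
  have [s0 s00 hs0] := gen_rad hm hz (hl z hz) hx e0.
  exists (Num.min s0 1); first by rewrite lt_min s00 ltr01.
  move=> s sp; rewrite lt_min => /andP[ss1 ss2].
  have hd : D2 (ps s z x) by apply: D2_ps => //; apply/andP; split => //; exact: ltW.
  have [sg [hsg E]] := Eminus_form hm hd.
  rewrite -/(ps s z x) E; exact: hs0.
- move=> H; have hl := usc_lscE H.
  have [m hm] := lsc_bounded hl.
  move=> z x hz hx; apply: rad_from_eps => e e0.
  have [s0 s00 hs0] := gen_rad hm hz (hl z hz) hx e0.
  exists (Num.min s0 1); first by rewrite lt_min s00 ltr01.
  move=> s sp; rewrite lt_min => /andP[ss1 ss2].
  have hd : D2 (ps s z x) by apply: D2_ps => //; apply/andP; split => //; exact: ltW.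
  have [sg [hsg E]] := Eplus_form hm hd.
  rewrite -/(ps s z x) E.
  have := hs0 s sp ss1 _ hsg; rewrite Fv_neg3 Xf_neg /= !neg_abs.
  by [].
Qed.
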